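(* In the commutative squares of canonical functors $$\operatorname{Pro}(\mathbf{Rng})\to\mathrm{Rng}(\operatorname{Pro}(\mathbf{Set})),\ \operatorname{Pro}(\mathbf{CRng})\to\mathrm{CRng}(\operatorname{Pro}(\mathbf{Set})),\ \operatorname{Pro}(\mathbf{CRng})\to\operatorname{Pro}(\mathbf{Rng}),\ \mathrm{CRng}(\operatorname{Pro}(\mathbf{Set}))\to\mathrm{Rng}(\operatorname{Pro}(\mathbf{Set}))$$ and $$\operatorname{Pro}(\mathbf{Ring})\to\mathrm{Ring}(\operatorname{Pro}(\mathbf{Set})),\ \operatorname{Pro}(\mathbf{CRing})\to\mathrm{CRing}(\operatorname{Pro}(\mathbf{Set})),\ \operatorname{Pro}(\mathbf{CRing})\to\operatorname{Pro}(\mathbf{Ring}),\ \mathrm{CRing}(\operatorname{Pro}(\mathbf{Set}))\to\mathrm{Ring}(\operatorname{Pro}(\mathbf{Set}))$$ all functors are fully faithful. Moreover, a pro-ring $R$ (object of $\operatorname{Pro}(\mathbf{Rng})$) is isomorphic in $\operatorname{Pro}(\mathbf{Rng})$ to a commutative pro-ring, to a unital pro-ring, or to a unital commutative pro-ring if and only if its image in $\mathrm{Rng}(\operatorname{Pro}(\mathbf{Set}))$ is, respectively, a commutative ring object, a unital ring object, or a unital commutative ring object in $\operatorname{Pro}(\mathbf{Set})$.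
   Context: For a category $\mathcal C$, $\operatorname{Pro}(\mathcal C)$ is its pro-completion: objects are inverse systems, i.e. functors $X\colon \mathcal I_X^{op}\to\mathcal C$ with $\mathcal I_X$ a small filtered category, and $\operatorname{Hom}_{\operatorname{Pro}(\mathcal C)}(X,Y)=\varprojlim_{j\in\mathcal I_Y}\varinjlim_{i\in\mathcal I_X}\mathcal C(X_i,Y_j)$. For an algebraic theory $T$ and a category $\mathcal D$ with finite products, $T(\mathcal D)$ is the category of internal $T$-algebras in $\mathcal D$; $\mathbf T=T(\mathbf{Set})$. Theories: $\mathrm{Rng}$ = non-unital associative rings, $\mathrm{Ring}$ = unital rings, $\mathrm{CRng}$ = non-unital commutative rings, $\mathrm{CRing}$ = unital commutative rings (homomorphisms of unital rings preserve units). The canonical functor $\operatorname{Pro}(\mathbf T)\to T(\operatorname{Pro}(\mathbf{Set}))$ sends an inverse system of $T$-algebras to the same inverse system of sets with levelwise operations. *)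

(* Defs.v *)
From Stdlib Require Import ClassicalEpsilon.
Set Implicit Arguments.
Unset Strict Implicit.

Record cat := Cat {
  ob :> Type;
  hom : ob -> ob -> Type;
  idm : forall a, hom a a;
  cmp : forall x y z, hom y z -> hom x y -> hom x z;
  cmp_id_l : forall a b (f : hom a b), cmp (idm b) f = f;
  cmp_id_r : forall a b (f : hom a b), cmp f (idm a) = f;
  cmp_assoc : forall a b c d (h : hom c d) (g : hom b c) (f : hom a b),
      cmp h (cmp g f) = cmp (cmp h g) f }.
Arguments idm {_} _.
Arguments cmp {_ x y z} _ _.

Definition filtered (I : cat) : Prop :=
  inhabited I /\
  (forall i j : I, exists k : I, inhabited (hom i k) /\ inhabited (hom j k)) /\
  (forall (i j : I) (u v : hom i j), exists (k : I) (w : hom j k), cmp w u = cmp w v).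

Lemma prod_cat_l (I J : cat) (a b : I * J) (f : hom (fst a) (fst b) * hom (snd a) (snd b)) :
  (cmp (idm (fst b)) (fst f), cmp (idm (snd b)) (snd f)) = f.
Proof. destruct f; simpl; rewrite !cmp_id_l; reflexivity. Qed.
Lemma prod_cat_r (I J : cat) (a b : I * J) (f : hom (fst a) (fst b) * hom (snd a) (snd b)) :
  (cmp (fst f) (idm (fst a)), cmp (snd f) (idm (snd a))) = f.
Proof. destruct f; simpl; rewrite !cmp_id_r; reflexivity. Qed.
Lemma prod_cat_A (I J : cat) (a b c d : I * J)
  (h : hom (fst c) (fst d) * hom (snd c) (snd d))
  (g : hom (fst b) (fst c) * hom (snd b) (snd c))
  (f : hom (fst a) (fst b) * hom (snd a) (snd b)) :
  (cmp (fst h) (fst (cmp (fst g) (fst f), cmp (snd g) (snd f))),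
   cmp (snd h) (snd (cmp (fst g) (fst f), cmp (snd g) (snd f)))) =
  (cmp (fst (cmp (fst h) (fst g), cmp (snd h) (snd g))) (fst f),
   cmp (snd (cmp (fst h) (fst g), cmp (snd h) (snd g))) (snd f)).
Proof. simpl; rewrite !cmp_assoc; reflexivity. Qed.

Definition prod_cat (I J : cat) : cat :=
  @Cat (I * J) (fun a b => (hom (fst a) (fst b) * hom (snd a) (snd b))%type)
    (fun a => (idm (fst a), idm (snd a)))
    (fun a b c g f => (cmp (fst g) (fst f), cmp (snd g) (snd f)))
    (@prod_cat_l I J) (@prod_cat_r I J) (@prod_cat_A I J).

Lemma prod_filtered (I J : cat) : filtered I -> filtered J -> filtered (prod_cat I J).
Proof.
  intros [[i0] [HI1 HI2]] [[j0] [HJ1 HJ2]]; split; [|split].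
  - exact (inhabits ((i0, j0) : prod_cat I J)).
  - intros [i j] [i' j'].
    destruct (HI1 i i') as [k [[u] [u']]]; destruct (HJ1 j j') as [l [[v] [v']]].
    exists ((k, l) : prod_cat I J); split; constructor; [exact (u, v) | exact (u', v')].
  - intros [i j] [i' j'] [u1 u2] [v1 v2].
    destruct (HI2 _ _ u1 v1) as [k [w1 E1]].
    destruct (HJ2 _ _ u2 v2) as [l [w2 E2]].
    exists ((k, l) : prod_cat I J), ((w1, w2) : hom (c0 := prod_cat I J) (i', j') (k, l)).
    simpl in *; rewrite E1, E2; reflexivity.
Qed.

Definition unit_cat : cat :=
  @Cat unit (fun _ _ => unit) (fun _ => tt) (fun _ _ _ _ _ => tt)
    (fun _ _ f => match f with tt => eq_refl end)
    (fun _ _ f => match f with tt => eq_refl end)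
    (fun _ _ _ _ _ _ _ => eq_refl).

Lemma unit_filtered : filtered unit_cat.
Proof.
  split; [exact (inhabits (tt : unit_cat)) | split].
  - intros i j; exists (tt : unit_cat); split; constructor; exact tt.
  - intros i j u v; exists (tt : unit_cat), (tt : hom (c0 := unit_cat) j tt); reflexivity.
Qed.

Record ccat := CCat {
  cob : Type;
  car : cob -> Type;
  ishom : forall a b, (car a -> car b) -> Prop;
  ishom_id : forall a, @ishom a a (fun x => x);
  ishom_comp : forall a b c (g : car b -> car c) (f : car a -> car b),
      ishom g -> ishom f -> ishom (fun x => g (f x)) }.
Arguments ishom {_ a b} _.
Arguments car : clear implicits.

Definition SetC : ccat :=
  @CCat Type (fun X => X) (fun _ _ _ => True) (fun _ => I) (fun _ _ _ _ _ _ _ => I).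

Record rng := Rng {
  rcar :> Type;
  radd : rcar -> rcar -> rcar;
  rzero : rcar;
  rneg : rcar -> rcar;
  rmul : rcar -> rcar -> rcar;
  raddA : forall x y z, radd (radd x y) z = radd x (radd y z);
  raddC : forall x y, radd x y = radd y x;
  radd0 : forall x, radd rzero x = x;
  raddN : forall x, radd (rneg x) x = rzero;
  rmulA : forall x y z, rmul (rmul x y) z = rmul x (rmul y z);
  rmulDr : forall x y z, rmul x (radd y z) = radd (rmul x y) (rmul x z);
  rmulDl : forall x y z, rmul (radd x y) z = radd (rmul x z) (rmul y z) }.
Arguments rzero {r}.

Definition rng_hom (A B : rng) (f : A -> B) : Prop :=
  (forall x y, f (radd x y) = radd (f x) (f y)) /\ f rzero = rzero /\
  (forall x, f (rneg x) = rneg (f x)) /\ (forall x y, f (rmul x y) = rmul (f x) (f y)).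

Record crng := CRng { crng_rng :> rng; crng_comm : forall x y : crng_rng, rmul x y = rmul y x }.

Record ring := Ring {
  ring_rng :> rng;
  rone : ring_rng;
  rmul1l : forall x, rmul rone x = x;
  rmul1r : forall x, rmul x rone = x }.
Definition ring_hom (A B : ring) (f : A -> B) : Prop := rng_hom f /\ f (rone A) = rone B.

Record cring := CRing { cring_ring :> ring; cring_comm : forall x y : cring_ring, rmul x y = rmul y x }.

Lemma rng_hom_id (A : rng) : rng_hom (fun x : A => x).
Proof. repeat split. Qed.
Lemma rng_hom_comp (A B C : rng) (g : B -> C) (f : A -> B) :
  rng_hom g -> rng_hom f -> rng_hom (fun x => g (f x)).
Proof.
  intros [g1 [g2 [g3 g4]]] [f1 [f2 [f3 f4]]]; repeat split; intros;
  rewrite ?f1, ?f2, ?f3, ?f4, ?g1, ?g2, ?g3, ?g4; reflexivity.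
Qed.
Lemma ring_hom_id (A : ring) : ring_hom (fun x : A => x).
Proof. split; [apply rng_hom_id | reflexivity]. Qed.
Lemma ring_hom_comp (A B C : ring) (g : B -> C) (f : A -> B) :
  ring_hom g -> ring_hom f -> ring_hom (fun x => g (f x)).
Proof.
  intros [Hg Eg] [Hf Ef]; split; [apply rng_hom_comp; assumption|].
  simpl; rewrite Ef; exact Eg.
Qed.

Definition RngC : ccat := @CCat rng rcar (@rng_hom) (@rng_hom_id) (@rng_hom_comp).
Definition CRngC : ccat :=
  @CCat crng (fun a => rcar (crng_rng a)) (fun a b f => @rng_hom a b f)
    (fun a => @rng_hom_id a) (fun a b c => @rng_hom_comp a b c).
Definition RingC : ccat := @CCat ring (fun a => rcar (ring_rng a)) (@ring_hom)
    (@ring_hom_id) (@ring_hom_comp).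
Definition CRingC : ccat :=
  @CCat cring (fun a => rcar (ring_rng (cring_ring a))) (fun a b f => @ring_hom a b f)
    (fun a => @ring_hom_id a) (fun a b c => @ring_hom_comp a b c).

(* Functors between concrete categories that act on underlying sets through
   (in all our instances: identity) bijections -- the forgetful functors. *)
Record cfunctor (C D : ccat) := CFunctor {
  fob : cob C -> cob D;
  fin : forall a, car C a -> car D (fob a);
  fout : forall a, car D (fob a) -> car C a;
  fin_out : forall (a : cob C) x, @fin a (@fout a x) = x;
  fout_in : forall (a : cob C) x, @fout a (@fin a x) = x;
  fhom : forall a b (f : car C a -> car C b), ishom f -> ishom (fun x => @fin b (f (@fout a x))) }.

Arguments fob {C D} c _.
Arguments fin {C D} c a _.
Arguments fout {C D} c a _.
Arguments fhom {C D} c {a b f} _.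

Definition ForgetSet (C : ccat) : cfunctor C SetC :=
  @CFunctor C SetC (car C) (fun _ x => x) (fun _ x => x)
    (fun _ _ => eq_refl) (fun _ _ => eq_refl) (fun _ _ _ _ => I).
Definition F_CRng_Rng : cfunctor CRngC RngC :=
  @CFunctor CRngC RngC crng_rng (fun _ x => x) (fun _ x => x)
    (fun _ _ => eq_refl) (fun _ _ => eq_refl) (fun _ _ _ h => h).
Definition F_Ring_Rng : cfunctor RingC RngC :=
  @CFunctor RingC RngC ring_rng (fun _ x => x) (fun _ x => x)
    (fun _ _ => eq_refl) (fun _ _ => eq_refl) (fun _ _ _ h => proj1 h).
Definition F_CRing_Ring : cfunctor CRingC RingC :=
  @CFunctor CRingC RingC cring_ring (fun _ x => x) (fun _ x => x)
    (fun _ _ => eq_refl) (fun _ _ => eq_refl) (fun _ _ _ h => h).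

Record prosys (C : ccat) := ProSys {
  pidx : cat;
  pidx_filt : filtered pidx;
  pobj : pidx -> cob C;
  pmap : forall i j : pidx, hom i j -> car C (pobj j) -> car C (pobj i);
  pmap_hom : forall i j (u : hom i j), ishom (pmap u);
  pmap_id : forall i x, pmap (idm i) x = x;
  pmap_comp : forall i j k (v : hom j k) (u : hom i j) x,
      pmap (cmp v u) x = pmap u (pmap v x) }.
Arguments pmap {C} p {i j} _ _.
Arguments pobj {C} p _.
Arguments pidx {C} p.
Arguments pidx_filt {C} p.
Arguments pmap_hom {C} p {i j} _.

(* An element of colim_i C(X_i, Y_j): a germ, i.e. a representative (i, f). *)
Record germ (C : ccat) (X Y : prosys C) (j : pidx Y) := Germ {
  gi : pidx X;
  gf : car C (pobj X gi) -> car C (pobj Y j);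
  gh : ishom gf }.
Arguments germ {C} X Y j.
Arguments Germ {C X Y j} gi gf gh.
Arguments gi {C X Y j} g.
Arguments gf {C X Y j} g _.
Arguments gh {C X Y j} g.

(* The equivalence relation defining the filtered colimit of hom-sets. *)
Definition germ_eq (C : ccat) (X Y : prosys C) (j : pidx Y) (g g' : germ X Y j) : Prop :=
  exists (k : pidx X) (u : hom (gi g) k) (u' : hom (gi g') k),
    forall x, gf g (pmap X u x) = gf g' (pmap X u' x).

(* Families (j |-> germ); a morphism of Pro(C) is such a family that is
   compatible (an element of the limit over j), taken modulo pro_eq. *)
Definition premor (C : ccat) (X Y : prosys C) := forall j : pidx Y, germ X Y j.

Definition germ_post (C : ccat) (X Y : prosys C) (j j' : pidx Y) (v : hom j j')
  (g : germ X Y j') : germ X Y j :=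
  Germ (gi g) (fun x => pmap Y v (gf g x)) (ishom_comp (pmap_hom Y v) (gh g)).

Definition is_promor (C : ccat) (X Y : prosys C) (phi : premor X Y) : Prop :=
  forall (j j' : pidx Y) (v : hom j j'), germ_eq (germ_post v (phi j')) (phi j).

Definition pro_eq (C : ccat) (X Y : prosys C) (phi psi : premor X Y) : Prop :=
  forall j, germ_eq (phi j) (psi j).

Definition pid (C : ccat) (X : prosys C) : premor X X :=
  fun j => Germ j (fun x => x) (ishom_id _).

Definition pcomp (C : ccat) (X Y Z : prosys C) (psi : premor Y Z) (phi : premor X Y)
  : premor X Z :=
  fun k => Germ (gi (phi (gi (psi k)))) (fun x => gf (psi k) (gf (phi (gi (psi k))) x))
                (ishom_comp (gh (psi k)) (gh (phi (gi (psi k))))).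

Arguments pid {C} X _.

Definition pro_iso (C : ccat) (X Y : prosys C) : Prop :=
  exists (phi : premor X Y) (psi : premor Y X),
    is_promor phi /\ is_promor psi /\
    pro_eq (pcomp psi phi) (pid X) /\ pro_eq (pcomp phi psi) (pid Y).

Definition pro_map_sys (C D : ccat) (F : cfunctor C D) (X : prosys C) : prosys D.
Proof.
  refine (@ProSys D (pidx X) (pidx_filt X) (fun i => fob F (pobj X i))
            (fun i j u x => fin F _ (pmap X u (fout F _ x)))
            (fun i j u => fhom F (pmap_hom X u)) _ _).
  - intros i x; rewrite pmap_id; apply fin_out.
  - intros i j k v u x; rewrite pmap_comp, fout_in; reflexivity.
Defined.

Definition pro_map_mor (C D : ccat) (F : cfunctor C D) (X Y : prosys C) (phi : premor X Y)
  : premor (pro_map_sys F X) (pro_map_sys F Y) :=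
  fun j => @Germ D (pro_map_sys F X) (pro_map_sys F Y) j (gi (phi j))
                (fun x => fin F _ (gf (phi j) (fout F _ x))) (fhom F (gh (phi j))).

Arguments pro_map_sys {C D} F X.
Arguments pro_map_mor {C D} F {X Y} phi _.

Definition pro_fully_faithful (C D : ccat) (F : cfunctor C D) : Prop :=
  forall X Y : prosys C,
    (forall phi psi : premor X Y, is_promor phi -> is_promor psi ->
        pro_eq (pro_map_mor F phi) (pro_map_mor F psi) -> pro_eq phi psi) /\
    (forall g : premor (pro_map_sys F X) (pro_map_sys F Y), is_promor g ->
        exists phi : premor X Y, is_promor phi /\ pro_eq (pro_map_mor F phi) g).

Definition some_idx (I : cat) (HI : filtered I) : I := epsilon (proj1 HI) (fun _ => True).

Definition common (I : cat) (HI : filtered I) (i j : I) : {k : I & (hom i k * hom j k)%type}.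
Proof.
  destruct (constructive_indefinite_description _ (proj1 (proj2 HI) i j)) as [k [Hi Hj]].
  exact (existT _ k (epsilon Hi (fun _ => True), epsilon Hj (fun _ => True))).
Defined.

Definition pset := prosys SetC.

Definition prod_sys (X Y : pset) : pset.
Proof.
  refine (@ProSys SetC (prod_cat (pidx X) (pidx Y))
            (prod_filtered (pidx_filt X) (pidx_filt Y))
            (fun ij => (pobj X (fst ij) * pobj Y (snd ij))%type)
            (fun a b uv p => (pmap X (fst uv) (fst p), pmap Y (snd uv) (snd p)))
            (fun _ _ _ => I) _ _).
  - intros i [x y]; simpl; rewrite !pmap_id; reflexivity.
  - intros i j k v u [x y]; simpl; rewrite !pmap_comp; reflexivity.
Defined.

Definition One : pset :=
  @ProSys SetC unit_cat unit_filtered (fun _ => unit : Type) (fun _ _ _ x => x)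
    (fun _ _ _ => I) (fun _ _ => eq_refl) (fun _ _ _ _ _ _ => eq_refl).

Definition bang (Z : pset) : premor Z One :=
  fun o => @Germ SetC Z One o (some_idx (pidx_filt Z)) (fun _ => tt : unit) I.


Definition pr1 (X Y : pset) : premor (prod_sys X Y) X :=
  fun j => @Germ SetC (prod_sys X Y) X j ((j, some_idx (pidx_filt Y)) : pidx (prod_sys X Y))
                (fun p : (pobj X j * pobj Y (some_idx (pidx_filt Y)))%type => fst p) I.
Definition pr2 (X Y : pset) : premor (prod_sys X Y) Y :=
  fun j => @Germ SetC (prod_sys X Y) Y j ((some_idx (pidx_filt X), j) : pidx (prod_sys X Y))
                (fun p : (pobj X (some_idx (pidx_filt X)) * pobj Y j)%type => snd p) I.


Arguments pr1 : clear implicits.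
Arguments pr2 : clear implicits.
Arguments bang : clear implicits.

Definition ppair (Z X Y : pset) (phi : premor Z X) (psi : premor Z Y)
  : premor Z (prod_sys X Y) :=
  fun jj =>
    let g := phi (fst jj) in
    let h := psi (snd jj) in
    let c := common (pidx_filt Z) (gi g) (gi h) in
    @Germ SetC Z (prod_sys X Y) jj (projT1 c : pidx Z)
      (fun z => (gf g (pmap Z (fst (projT2 c)) z), gf h (pmap Z (snd (projT2 c)) z)) :
          (pobj X (fst jj) * pobj Y (snd jj))%type) I.

Record rngdata := RngData {
  ro_X : pset;
  ro_add : premor (prod_sys ro_X ro_X) ro_X;
  ro_zero : premor One ro_X;
  ro_neg : premor ro_X ro_X;
  ro_mul : premor (prod_sys ro_X ro_X) ro_X }.

Arguments ro_add : clear implicits.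
Arguments ro_zero : clear implicits.
Arguments ro_neg : clear implicits.
Arguments ro_mul : clear implicits.

Section RingObjAxioms.
Variable A : rngdata.
Let X := ro_X A.
Let X2 := prod_sys X X.
Let X3 := prod_sys X2 X.
Let p1 : premor X3 X := pcomp (pr1 X X) (pr1 X2 X).
Let p2 : premor X3 X := pcomp (pr2 X X) (pr1 X2 X).
Let p3 : premor X3 X := pr2 X2 X.
Let q1 : premor X2 X := pr1 X X.
Let q2 : premor X2 X := pr2 X X.
Let add := ro_add A.
Let mul := ro_mul A.

Definition is_rngobj : Prop :=
  is_promor add /\ is_promor (ro_zero A) /\ is_promor (ro_neg A) /\ is_promor mul /\
  (* (x + y) + z = x + (y + z) *)
  pro_eq (pcomp add (ppair (pcomp add (ppair p1 p2)) p3))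
         (pcomp add (ppair p1 (pcomp add (ppair p2 p3)))) /\
  (* x + y = y + x *)
  pro_eq (pcomp add (ppair q2 q1)) add /\
  (* 0 + x = x *)
  pro_eq (pcomp add (ppair (pcomp (ro_zero A) (bang X)) (pid X))) (pid X) /\
  (* (-x) + x = 0 *)
  pro_eq (pcomp add (ppair (ro_neg A) (pid X))) (pcomp (ro_zero A) (bang X)) /\
  (* (x y) z = x (y z) *)
  pro_eq (pcomp mul (ppair (pcomp mul (ppair p1 p2)) p3))
         (pcomp mul (ppair p1 (pcomp mul (ppair p2 p3)))) /\
  (* x (y + z) = x y + x z *)
  pro_eq (pcomp mul (ppair p1 (pcomp add (ppair p2 p3))))
         (pcomp add (ppair (pcomp mul (ppair p1 p2)) (pcomp mul (ppair p1 p3)))) /\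
  (* (x + y) z = x z + y z *)
  pro_eq (pcomp mul (ppair (pcomp add (ppair p1 p2)) p3))
         (pcomp add (ppair (pcomp mul (ppair p1 p3)) (pcomp mul (ppair p2 p3)))).

Definition ro_comm : Prop := pro_eq (pcomp mul (ppair q2 q1)) mul.

Definition is_crngobj : Prop := is_rngobj /\ ro_comm.

Definition ro_unit_laws (e : premor One X) : Prop :=
  is_promor e /\
  pro_eq (pcomp mul (ppair (pcomp e (bang X)) (pid X))) (pid X) /\
  pro_eq (pcomp mul (ppair (pid X) (pcomp e (bang X)))) (pid X).
End RingObjAxioms.

Definition pprod_map (X Y : pset) (f : premor X Y) : premor (prod_sys X X) (prod_sys Y Y) :=
  ppair (pcomp f (pr1 X X)) (pcomp f (pr2 X X)).

Definition is_rngobj_mor (A B : rngdata) (f : premor (ro_X A) (ro_X B)) : Prop :=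
  is_promor f /\
  pro_eq (pcomp f (ro_add A)) (pcomp (ro_add B) (pprod_map f)) /\
  pro_eq (pcomp f (ro_zero A)) (ro_zero B) /\
  pro_eq (pcomp f (ro_neg A)) (pcomp (ro_neg B) f) /\
  pro_eq (pcomp f (ro_mul A)) (pcomp (ro_mul B) (pprod_map f)).
Arguments is_rngobj_mor : clear implicits.
Definition is_crngobj_mor (A B : rngdata) (f : premor (ro_X A) (ro_X B)) : Prop :=
  is_rngobj_mor A B f.

Arguments is_crngobj_mor : clear implicits.
Arguments ro_unit_laws : clear implicits.

Record uringdata := URingData { ur_base : rngdata; ur_one : premor One (ro_X ur_base) }.
Arguments ur_one : clear implicits.
Definition is_uringobj (A : uringdata) : Prop :=
  is_rngobj (ur_base A) /\ ro_unit_laws (ur_base A) (ur_one A).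
Definition is_curingobj (A : uringdata) : Prop :=
  is_uringobj A /\ ro_comm (ur_base A).
Definition is_uringobj_mor (A B : uringdata) (f : premor (ro_X (ur_base A)) (ro_X (ur_base B)))
  : Prop := is_rngobj_mor (ur_base A) (ur_base B) f /\ pro_eq (pcomp f (ur_one A)) (ur_one B).
Arguments is_uringobj_mor : clear implicits.
Definition is_curingobj_mor (A B : uringdata) (f : premor (ro_X (ur_base A)) (ro_X (ur_base B)))
  : Prop := is_uringobj_mor A B f.
Arguments is_curingobj_mor : clear implicits.

(* The canonical functors Pro(T) -> T(Pro(Set)): same inverse system of *)
(* sets, with levelwise operations.                                    *)
Definition USet (C : ccat) := ForgetSet C.

Definition img_rng (R : prosys RngC) : rngdata :=
  let X := pro_map_sys (USet RngC) R in
  @RngData X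
    (fun j => @Germ SetC (prod_sys X X) X j ((j, j) : pidx (prod_sys X X))
                (fun p : (pobj R j * pobj R j)%type => radd (fst p) (snd p)) I)
    (fun j => @Germ SetC One X j (tt : pidx One) (fun _ : unit => @rzero (pobj R j)) I)
    (fun j => @Germ SetC X X j j (fun x : pobj R j => rneg x) I)
    (fun j => @Germ SetC (prod_sys X X) X j ((j, j) : pidx (prod_sys X X))
                (fun p : (pobj R j * pobj R j)%type => rmul (fst p) (snd p)) I).

Definition img_ring (R : prosys RingC) : uringdata :=
  @URingData (img_rng (pro_map_sys F_Ring_Rng R))
    (fun j => @Germ SetC One (ro_X (img_rng (pro_map_sys F_Ring_Rng R))) j
                (tt : pidx One) (fun _ : unit => rone (pobj R j)) I).

Definition img_crng (R : prosys CRngC) : rngdata := img_rng (pro_map_sys F_CRng_Rng R).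
Definition img_cring (R : prosys CRingC) : uringdata := img_ring (pro_map_sys F_CRing_Ring R).

Definition FF_ProRng_RngObj : Prop :=
  forall R S : prosys RngC,
    (forall phi psi : premor R S, is_promor phi -> is_promor psi ->
        pro_eq (pro_map_mor (USet RngC) phi) (pro_map_mor (USet RngC) psi) ->
        pro_eq phi psi) /\
    (forall g : premor (ro_X (img_rng R)) (ro_X (img_rng S)),
        is_rngobj_mor (img_rng R) (img_rng S) g ->
        exists phi : premor R S, is_promor phi /\ pro_eq (pro_map_mor (USet RngC) phi) g).

Definition FF_ProCRng_CRngObj : Prop :=
  forall R S : prosys CRngC,
    (forall phi psi : premor R S, is_promor phi -> is_promor psi ->
        pro_eq (pro_map_mor (USet RngC) (pro_map_mor F_CRng_Rng phi))
               (pro_map_mor (USet RngC) (pro_map_mor F_CRng_Rng psi)) ->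
        pro_eq phi psi) /\
    (forall g : premor (ro_X (img_crng R)) (ro_X (img_crng S)),
        is_crngobj_mor (img_crng R) (img_crng S) g ->
        exists phi : premor R S, is_promor phi /\
          pro_eq (pro_map_mor (USet RngC) (pro_map_mor F_CRng_Rng phi)) g).

Definition FF_CRngObj_RngObj : Prop :=
  forall A B : rngdata, is_crngobj A -> is_crngobj B ->
    forall f : premor (ro_X A) (ro_X B), is_crngobj_mor A B f <-> is_rngobj_mor A B f.

Definition FF_ProRing_RingObj : Prop :=
  forall R S : prosys RingC,
    (forall phi psi : premor R S, is_promor phi -> is_promor psi ->
        pro_eq (pro_map_mor (USet RngC) (pro_map_mor F_Ring_Rng phi))
               (pro_map_mor (USet RngC) (pro_map_mor F_Ring_Rng psi)) ->
        pro_eq phi psi) /\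
    (forall g : premor (ro_X (ur_base (img_ring R))) (ro_X (ur_base (img_ring S))),
        is_uringobj_mor (img_ring R) (img_ring S) g ->
        exists phi : premor R S, is_promor phi /\
          pro_eq (pro_map_mor (USet RngC) (pro_map_mor F_Ring_Rng phi)) g).

Definition FF_ProCRing_CRingObj : Prop :=
  forall R S : prosys CRingC,
    (forall phi psi : premor R S, is_promor phi -> is_promor psi ->
        pro_eq (pro_map_mor (USet RngC) (pro_map_mor F_Ring_Rng (pro_map_mor F_CRing_Ring phi)))
               (pro_map_mor (USet RngC) (pro_map_mor F_Ring_Rng (pro_map_mor F_CRing_Ring psi))) ->
        pro_eq phi psi) /\
    (forall g : premor (ro_X (ur_base (img_cring R))) (ro_X (ur_base (img_cring S))),
        is_curingobj_mor (img_cring R) (img_cring S) g ->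
        exists phi : premor R S, is_promor phi /\
          pro_eq (pro_map_mor (USet RngC)
                    (pro_map_mor F_Ring_Rng (pro_map_mor F_CRing_Ring phi))) g).

Definition FF_CRingObj_RingObj : Prop :=
  forall A B : uringdata, is_curingobj A -> is_curingobj B ->
    forall f : premor (ro_X (ur_base A)) (ro_X (ur_base B)),
      is_curingobj_mor A B f <-> is_uringobj_mor A B f.

(* Main.v *)
Require Import Defs.
From Stdlib Require Import ClassicalEpsilon ProofIrrelevance FunctionalExtensionality PropExtensionality.
Set Implicit Arguments.
Unset Strict Implicit.


Set Implicit Arguments.
Unset Strict Implicit.

Section Filt.
Variable Ic : cat.
Hypothesis HI : filtered Ic.

Lemma f_common (i j : Ic) : exists k (a : hom i k) (b : hom j k), True.
Proof. destruct HI as [_ [H _]]. destruct (H i j) as [k [[a] [b]]]. exists k, a, b; exact Logic.I. Qed.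

Lemma f_equalize (i j : Ic) (u v : hom i j) : exists k (w : hom j k), cmp w u = cmp w v.
Proof. destruct HI as [_ [_ H]]. apply H. Qed.

Lemma f_merge (j a b : Ic) (u : hom j a) (v : hom j b) :
  exists k (p : hom a k) (q : hom b k), cmp p u = cmp q v.
Proof.
  destruct (f_common a b) as [m [x [y _]]].
  destruct (f_equalize (cmp x u) (cmp y v)) as [k [w E]].
  exists k, (cmp w x), (cmp w y). rewrite <- !cmp_assoc. exact E.
Qed.

Lemma f_merge2 (i i' c m : Ic) (al : hom i c) (a : hom i m) (be : hom i' c) (b : hom i' m) :
  exists k (p : hom c k) (q : hom m k), cmp p al = cmp q a /\ cmp p be = cmp q b.
Proof.
  destruct (f_merge al a) as [k1 [p1 [q1 E1]]].
  destruct (f_equalize (cmp p1 be) (cmp q1 b)) as [k [w E]].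
  exists k, (cmp w p1), (cmp w q1). rewrite <- !cmp_assoc. split; [|exact E].
  rewrite E1. reflexivity.
Qed.

Lemma f_merge4 (j k1 k2 : Ic) (a a' : hom j k1) (b b' : hom j k2) :
  exists n (p1 : hom k1 n) (p2 : hom k2 n),
    cmp p1 a = cmp p2 b /\ cmp p1 a' = cmp p2 b /\ cmp p2 b' = cmp p2 b.
Proof.
  destruct (f_equalize a a') as [m1 [w1 E1]].
  destruct (f_equalize b b') as [m2 [w2 E2]].
  destruct (f_merge (cmp w1 a) (cmp w2 b)) as [n [x [y E]]].
  exists n, (cmp x w1), (cmp y w2). rewrite <- !cmp_assoc.
  rewrite <- E1, <- E2. split; [exact E|split; [exact E|reflexivity]].
Qed.

Lemma f_common3 (i1 i2 i3 : Ic) :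
  exists k (a1 : hom i1 k) (a2 : hom i2 k) (a3 : hom i3 k), True.
Proof.
  destruct (f_common i1 i2) as [m [a [b _]]].
  destruct (f_common m i3) as [k [c [d _]]].
  exists k, (cmp c a), (cmp c b), d; exact Logic.I.
Qed.
End Filt.

Section Germs.
Variable C : ccat.
Variables X Y : prosys C.

Lemma pmapC (i j k : pidx X) (v : hom j k) (u : hom i j) x :
  pmap X u (pmap X v x) = pmap X (cmp v u) x.
Proof. rewrite pmap_comp; reflexivity. Qed.

Lemma germ_eq_refl j (g : germ X Y j) : germ_eq g g.
Proof. exists (gi g), (idm _), (idm _). intros; reflexivity. Qed.

Lemma germ_eq_sym j (g g' : germ X Y j) : germ_eq g g' -> germ_eq g' g.
Proof. intros [k [u [u' H]]]. exists k, u', u. intros; symmetry; apply H. Qed.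

Lemma germ_eq_trans j (g g' g'' : germ X Y j) : germ_eq g g' -> germ_eq g' g'' -> germ_eq g g''.
Proof.
  intros [k [u [u' H]]] [k' [w [w' H']]].
  destruct (f_merge (pidx_filt X) u' w) as [m [p [q E]]].
  exists m, (cmp p u), (cmp q w'). intros x.
  rewrite <- !pmapC, H, !pmapC, E, <- !pmapC, H'. reflexivity.
Qed.

Lemma germ_lift j (g : germ X Y j) m (a : hom (gi g) m) :
  germ_eq g (Germ m (fun x => gf g (pmap X a x)) (ishom_comp (gh g) (pmap_hom X a))).
Proof. exists m, a, (idm m). intros x; simpl. rewrite pmap_id. reflexivity. Qed.

Lemma germ_ext j i (f f' : car C (pobj X i) -> car C (pobj Y j)) h h' :
  (forall x, f x = f' x) -> germ_eq (Germ i f h) (Germ i f' h').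
Proof. intros H. exists i, (idm i), (idm i). intros; simpl. apply H. Qed.

Lemma germ_post_cong j j' (v : hom j j') (g g' : germ X Y j') :
  germ_eq g g' -> germ_eq (germ_post v g) (germ_post v g').
Proof. intros [k [u [u' H]]]. exists k, u, u'. intros x; simpl. rewrite H. reflexivity. Qed.

Lemma pro_eq_refl (phi : premor X Y) : pro_eq phi phi.
Proof. intro; apply germ_eq_refl. Qed.
Lemma pro_eq_sym (phi psi : premor X Y) : pro_eq phi psi -> pro_eq psi phi.
Proof. intros H j; apply germ_eq_sym, H. Qed.
Lemma pro_eq_trans (phi psi chi : premor X Y) : pro_eq phi psi -> pro_eq psi chi -> pro_eq phi chi.
Proof. intros H H' j; eapply germ_eq_trans; [apply H|apply H']. Qed.

Lemma promor_eq (phi psi : premor X Y) : is_promor phi -> pro_eq phi psi -> is_promor psi.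
Proof.
  intros Hp He j j' v.
  eapply germ_eq_trans; [apply germ_post_cong, germ_eq_sym, He|].
  eapply germ_eq_trans; [apply Hp|apply He].
Qed.
End Germs.


Set Implicit Arguments.
Unset Strict Implicit.

Lemma pair_nf (Z X Y : pset) (phi : premor Z X) (psi : premor Z Y) (j1 : pidx X) (j2 : pidx Y)
  (m : pidx Z) (F : pobj Z m -> pobj X j1) (G : pobj Z m -> pobj Y j2) :
  germ_eq (phi j1) (Germ m F Logic.I) -> germ_eq (psi j2) (Germ m G Logic.I) ->
  germ_eq (ppair phi psi ((j1, j2) : pidx (prod_sys X Y)))
          (@Germ SetC Z (prod_sys X Y) ((j1, j2) : pidx (prod_sys X Y)) m
              (fun z => (F z, G z) : (pobj X j1 * pobj Y j2)%type) Logic.I).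
Proof.
  intros [k1 [u1 [u1' H1]]] [k2 [u2 [u2' H2]]].
  destruct (f_merge (pidx_filt Z) u1' u2') as [K [p1 [p2 E]]].
  unfold ppair; simpl.
  destruct (common (pidx_filt Z) (gi (phi j1)) (gi (psi j2))) as [c [al be]]; simpl.
  destruct (f_merge2 (pidx_filt Z) al (cmp p1 u1) be (cmp p2 u2)) as [k [P [Q [E1 E2]]]].
  exists k, P, (cmp Q (cmp p1 u1')). intros x; simpl in *.
  rewrite !pmapC, E1, E2, !cmp_assoc, <- !pmapC, H1, H2, (pmapC p1 u1'), (pmapC p2 u2'), E.
  reflexivity.
Qed.

Lemma post_cong (Z Y W : pset) (j : pidx Y) (j' : pidx W) (H : pobj Y j -> pobj W j')
  (P Q : germ Z Y j) :
  germ_eq P Q -> germ_eq (@Germ SetC Z W j' (gi P) (fun x => H (gf P x)) Logic.I)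
                         (@Germ SetC Z W j' (gi Q) (fun x => H (gf Q x)) Logic.I).
Proof. intros [k [u [u' E]]]. exists k, u, u'. intros x; simpl. rewrite E. reflexivity. Qed.

Lemma const_nf (Z Y : pset) (j : pidx Y) (i m : pidx Z) (c : pobj Y j) :
  germ_eq (@Germ SetC Z Y j i (fun _ => c) Logic.I) (@Germ SetC Z Y j m (fun _ => c) Logic.I).
Proof.
  destruct (f_common (pidx_filt Z) i m) as [k [a [b _]]]. exists k, a, b. reflexivity.
Qed.

Lemma lift_nf (Z Y : pset) (j : pidx Y) (g : germ Z Y j) (m : pidx Z) (a : hom (gi g) m) :
  germ_eq g (@Germ SetC Z Y j m (fun x => gf g (pmap Z a x)) Logic.I).
Proof. exists m, a, (idm m). intros x; simpl. rewrite pmap_id. reflexivity. Qed.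

Section Img.
Variable R : prosys RngC.
Let X := ro_X (img_rng R).

Lemma add_nf (Z : pset) (phi psi : premor Z X) (j : pidx X) (m : pidx Z)
  (F G : pobj Z m -> pobj X j) :
  germ_eq (phi j) (Germ m F Logic.I) -> germ_eq (psi j) (Germ m G Logic.I) ->
  germ_eq (pcomp (ro_add (img_rng R)) (ppair phi psi) j)
          (@Germ SetC Z X j m (fun z => radd (F z) (G z)) Logic.I).
Proof.
  intros H1 H2. exact (@post_cong Z (prod_sys X X) X ((j, j) : pidx (prod_sys X X)) j
    (fun p : (pobj X j * pobj X j)%type => radd (fst p) (snd p)) _ _ (pair_nf H1 H2)).
Qed.

Lemma mul_nf (Z : pset) (phi psi : premor Z X) (j : pidx X) (m : pidx Z)
  (F G : pobj Z m -> pobj X j) :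
  germ_eq (phi j) (Germ m F Logic.I) -> germ_eq (psi j) (Germ m G Logic.I) ->
  germ_eq (pcomp (ro_mul (img_rng R)) (ppair phi psi) j)
          (@Germ SetC Z X j m (fun z => rmul (F z) (G z)) Logic.I).
Proof.
  intros H1 H2. exact (@post_cong Z (prod_sys X X) X ((j, j) : pidx (prod_sys X X)) j
    (fun p : (pobj X j * pobj X j)%type => rmul (fst p) (snd p)) _ _ (pair_nf H1 H2)).
Qed.
End Img.


Set Implicit Arguments.
Unset Strict Implicit.

Lemma close (Z Y : pset) (j : pidx Y) (g g' : germ Z Y j) (m : pidx Z) (F G : pobj Z m -> pobj Y j) :
  germ_eq g (Germ m F Logic.I) -> germ_eq g' (Germ m G Logic.I) -> (forall x, F x = G x) ->
  germ_eq g g'.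
Proof.
  intros H1 H2 E. eapply germ_eq_trans; [exact H1|]. eapply germ_eq_trans; [|apply germ_eq_sym; exact H2].
  apply germ_ext; exact E.
Qed.

Lemma pair_proj (X Y : pset) (j1 : pidx X) (j2 : pidx Y) :
  germ_eq (ppair (pr1 X Y) (pr2 X Y) ((j1, j2) : pidx (prod_sys X Y)))
          (pid (prod_sys X Y) ((j1, j2) : pidx (prod_sys X Y))).
Proof.
  unfold ppair; simpl.
  destruct (common _ _ _) as [c [al be]]; simpl.
  exists c, (idm c), ((fst al, snd be) : hom (c0 := pidx (prod_sys X Y)) (j1, j2) c).
  intros x. rewrite pmap_id. destruct x; reflexivity.
Qed.

Section Img.
Variable R : prosys RngC.
Let X := ro_X (img_rng R).

Lemma rngobj_img : is_rngobj (img_rng R).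
Proof.
  unfold is_rngobj.
  split; [|split; [|split; [|split; [|split; [|split; [|split; [|split; [|split; [|split]]]]]]]]].
  - intros j j' v. exists ((j', j') : pidx (prod_sys X X)), (idm _), ((v, v) : hom (c0 := pidx (prod_sys X X)) (j, j) (j', j')).
    intros [x y]; simpl. rewrite !pmap_id. apply (pmap_hom R v).
  - intros j j' v. exists tt, tt, tt. intros x; simpl. apply (pmap_hom R v).
  - intros j j' v. exists j', (idm _), v. intros x; simpl. rewrite !pmap_id. apply (pmap_hom R v).
  - intros j j' v. exists ((j', j') : pidx (prod_sys X X)), (idm _), ((v, v) : hom (c0 := pidx (prod_sys X X)) (j, j) (j', j')).
    intros [x y]; simpl. rewrite !pmap_id. apply (pmap_hom R v).
  - intros j.
    set (X3 := prod_sys (prod_sys X X) X).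
    destruct (f_common3 (pidx_filt X3) (gi (pcomp (pr1 X X) (pr1 (prod_sys X X) X) j))
                (gi (pcomp (pr2 X X) (pr1 (prod_sys X X) X) j)) (gi (pr2 (prod_sys X X) X j)))
      as [m [a1 [a2 [a3 _]]]].
    eapply close with (m := m).
    + apply add_nf; [apply add_nf; [apply (lift_nf a1)|apply (lift_nf a2)] | apply (lift_nf a3)].
    + apply add_nf; [apply (lift_nf a1)|apply add_nf; [apply (lift_nf a2) | apply (lift_nf a3)]].
    + intros x. apply raddA.
  - intros j.
    eapply germ_eq_trans with (g' := pcomp (ro_add (img_rng R)) (ppair (pr1 X X) (pr2 X X)) j).
    + destruct (f_common (pidx_filt (prod_sys X X)) (gi (pr1 X X j)) (gi (pr2 X X j)))
        as [m [a1 [a2 _]]].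
      eapply close with (m := m).
      * apply add_nf; [apply (lift_nf a2)|apply (lift_nf a1)].
      * apply add_nf; [apply (lift_nf a1)|apply (lift_nf a2)].
      * intros x. apply raddC.
    + exact (@post_cong _ (prod_sys X X) X ((j, j) : pidx (prod_sys X X)) j
             (fun p : (pobj X j * pobj X j)%type => radd (fst p) (snd p)) _ _ (@pair_proj X X j j)).
  - intros j.
    destruct (f_common (pidx_filt X) (gi (pcomp (ro_zero (img_rng R)) (bang X) j)) j)
      as [m [a1 [a2 _]]].
    eapply close with (m := m).
    + apply add_nf; [apply (lift_nf a1)|apply (lift_nf (g := pid X j) a2)].
    + apply (lift_nf (g := pid X j) a2).
    + intros x. apply radd0.
  - intros j.
    destruct (f_common (pidx_filt X) j (gi (pcomp (ro_zero (img_rng R)) (bang X) j)))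
      as [m [a1 [a2 _]]].
    eapply close with (m := m).
    + apply add_nf; [apply (lift_nf (g := ro_neg (img_rng R) j) a1)|apply (lift_nf (g := pid X j) a1)].
    + apply (lift_nf a2).
    + intros x. apply raddN.
  - intros j.
    set (X3 := prod_sys (prod_sys X X) X).
    destruct (f_common3 (pidx_filt X3) (gi (pcomp (pr1 X X) (pr1 (prod_sys X X) X) j))
                (gi (pcomp (pr2 X X) (pr1 (prod_sys X X) X) j)) (gi (pr2 (prod_sys X X) X j)))
      as [m [a1 [a2 [a3 _]]]].
    eapply close with (m := m).
    + apply mul_nf; [apply mul_nf; [apply (lift_nf a1)|apply (lift_nf a2)] | apply (lift_nf a3)].
    + apply mul_nf; [apply (lift_nf a1)|apply mul_nf; [apply (lift_nf a2) | apply (lift_nf a3)]].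
    + intros x. apply rmulA.
  - intros j.
    set (X3 := prod_sys (prod_sys X X) X).
    destruct (f_common3 (pidx_filt X3) (gi (pcomp (pr1 X X) (pr1 (prod_sys X X) X) j))
                (gi (pcomp (pr2 X X) (pr1 (prod_sys X X) X) j)) (gi (pr2 (prod_sys X X) X j)))
      as [m [a1 [a2 [a3 _]]]].
    eapply close with (m := m).
    + apply mul_nf; [apply (lift_nf a1)|apply add_nf; [apply (lift_nf a2) | apply (lift_nf a3)]].
    + apply add_nf; [apply mul_nf; [apply (lift_nf a1)|apply (lift_nf a2)]|apply mul_nf; [apply (lift_nf a1)|apply (lift_nf a3)]].
    + intros x. apply rmulDr.
  - intros j.
    set (X3 := prod_sys (prod_sys X X) X).
    destruct (f_common3 (pidx_filt X3) (gi (pcomp (pr1 X X) (pr1 (prod_sys X X) X) j))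
                (gi (pcomp (pr2 X X) (pr1 (prod_sys X X) X) j)) (gi (pr2 (prod_sys X X) X j)))
      as [m [a1 [a2 [a3 _]]]].
    eapply close with (m := m).
    + apply mul_nf; [apply add_nf; [apply (lift_nf a1) | apply (lift_nf a2)]|apply (lift_nf a3)].
    + apply add_nf; [apply mul_nf; [apply (lift_nf a1)|apply (lift_nf a3)]|apply mul_nf; [apply (lift_nf a2)|apply (lift_nf a3)]].
    + intros x. apply rmulDl.
Qed.
End Img.


Set Implicit Arguments.
Unset Strict Implicit.

Section Diag.
Variables X W : pset.
Let X2 := prod_sys X X.

Lemma diag2 (j : pidx X) (j' : pidx W) (m : pidx X2) (a : hom (c0 := pidx X2) (j, j) m)
  (P Q : (pobj X j * pobj X j)%type -> pobj W j') :
  germ_eq (@Germ SetC X2 W j' m (fun z => P (pmap X2 a z)) Logic.I)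
          (@Germ SetC X2 W j' m (fun z => Q (pmap X2 a z)) Logic.I) ->
  exists n (t : hom j n), forall y y', P (pmap X t y, pmap X t y') = Q (pmap X t y, pmap X t y').
Proof.
  intros [[k1 k2] [[u1 u2] [[u1' u2'] H]]]. destruct m as [m1 m2]. destruct a as [a1 a2].
  simpl in *.
  destruct (f_merge4 (pidx_filt X) (cmp u1 a1) (cmp u1' a1) (cmp u2 a2) (cmp u2' a2))
    as [n [p1 [p2 [E1 [E2 E3]]]]].
  exists n, (cmp p2 (cmp u2 a2)). intros y y'.
  specialize (H (pmap X p1 y, pmap X p2 y')). simpl in H.
  rewrite !pmapC in H. rewrite E1, E2, E3 in H. exact H.
Qed.

Lemma diag2_conv (j : pidx X) (j' : pidx W) (m : pidx X2) (a : hom (c0 := pidx X2) (j, j) m)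
  (P Q : (pobj X j * pobj X j)%type -> pobj W j') :
  (exists n (t : hom j n), forall y y', P (pmap X t y, pmap X t y') = Q (pmap X t y, pmap X t y')) ->
  germ_eq (@Germ SetC X2 W j' m (fun z => P (pmap X2 a z)) Logic.I)
          (@Germ SetC X2 W j' m (fun z => Q (pmap X2 a z)) Logic.I).
Proof.
  intros [n [t H]]. destruct m as [m1 m2]. destruct a as [a1 a2]. simpl in a1, a2.
  destruct (f_merge (pidx_filt X) a1 t) as [k1 [p1 [q1 E1]]].
  destruct (f_merge (pidx_filt X) a2 t) as [k2 [p2 [q2 E2]]].
  exists ((k1, k2) : pidx X2), ((p1, p2) : hom (c0 := pidx X2) (m1, m2) (k1, k2)),
         ((p1, p2) : hom (c0 := pidx X2) (m1, m2) (k1, k2)).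
  intros [x1 x2]. simpl. rewrite !pmapC, E1, E2, <- !pmapC. apply H.
Qed.

Lemma diag1 (j : pidx X) (j' : pidx W) (m : pidx X) (a : hom j m)
  (P Q : pobj X j -> pobj W j') :
  germ_eq (@Germ SetC X W j' m (fun z => P (pmap X a z)) Logic.I)
          (@Germ SetC X W j' m (fun z => Q (pmap X a z)) Logic.I) ->
  exists n (t : hom j n), forall y, P (pmap X t y) = Q (pmap X t y).
Proof.
  intros [k [u [u' H]]]. simpl in u, u', H.
  destruct (f_equalize (pidx_filt X) (cmp u a) (cmp u' a)) as [n [w E]].
  exists n, (cmp w (cmp u a)). intros y.
  specialize (H (pmap X w y)). rewrite !pmapC in H. rewrite <- E in H. exact H.
Qed.

Lemma diag1_conv (j : pidx X) (j' : pidx W) (m : pidx X) (a : hom j m)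
  (P Q : pobj X j -> pobj W j') :
  (exists n (t : hom j n), forall y, P (pmap X t y) = Q (pmap X t y)) ->
  germ_eq (@Germ SetC X W j' m (fun z => P (pmap X a z)) Logic.I)
          (@Germ SetC X W j' m (fun z => Q (pmap X a z)) Logic.I).
Proof.
  intros [n [t H]].
  destruct (f_merge (pidx_filt X) a t) as [k [p [q E]]].
  exists k, p, p. intros x. simpl. rewrite !pmapC, E, <- !pmapC. apply H.
Qed.

Lemma ev_and2 (j : pidx X) (P1 P2 : pobj X j -> pobj X j -> Prop) :
  (exists n (t : hom j n), forall y y', P1 (pmap X t y) (pmap X t y')) ->
  (exists n (t : hom j n), forall y y', P2 (pmap X t y) (pmap X t y')) ->
  exists n (t : hom j n), forall y y', P1 (pmap X t y) (pmap X t y') /\ P2 (pmap X t y) (pmap X t y').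
Proof.
  intros [n1 [t1 H1]] [n2 [t2 H2]].
  destruct (f_merge (pidx_filt X) t1 t2) as [n [p1 [p2 E]]].
  exists n, (cmp p1 t1). intros y y'. split.
  - rewrite <- !pmapC. apply H1.
  - rewrite E, <- !pmapC. apply H2.
Qed.
End Diag.


Set Implicit Arguments.
Unset Strict Implicit.

Definition EC (R : prosys RngC) (j : pidx R) : Prop :=
  exists n (t : hom j n), forall y y' : pobj R n,
    rmul (pmap R t y) (pmap R t y') = rmul (pmap R t y') (pmap R t y).

Definition ecompat (R : prosys RngC) (e : forall j, pobj R j) : Prop :=
  forall j j' (v : hom j j'), pmap R v (e j') = e j.

Definition EU (R : prosys RngC) (e : forall j, pobj R j) (j : pidx R) : Prop :=
  exists n (t : hom j n), forall y : pobj R n,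
    rmul (e j) (pmap R t y) = pmap R t y /\ rmul (pmap R t y) (e j) = pmap R t y.

Arguments EC : clear implicits.
Arguments ecompat : clear implicits.
Arguments EU : clear implicits.

Section Img.
Variable R : prosys RngC.
Let X := ro_X (img_rng R).
Let X2 := prod_sys X X.

Lemma comm_EC : ro_comm (img_rng R) -> forall j, EC R j.
Proof.
  intros H j. unfold ro_comm in H. specialize (H j).
  destruct (f_common (pidx_filt X) j (some_idx (pidx_filt X))) as [c1 [al [be _]]].
  destruct (f_common (pidx_filt X) (some_idx (pidx_filt X)) j) as [c2 [ga [de _]]].
  assert (H1 : germ_eq (pcomp (ro_mul (img_rng R)) (ppair (pr2 X X) (pr1 X X)) j)
     (@Germ SetC X2 X j ((c1, c2) : pidx X2)
        (fun z => (fun p : (pobj X j * pobj X j)%type => rmul (snd p) (fst p))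
             (pmap X2 ((al, de) : hom (c0 := pidx X2) (j, j) (c1, c2)) z)) Logic.I)).
  { apply mul_nf.
    - exact (lift_nf (g := pr2 X X j) ((be, de) : hom (c0 := pidx X2) (_, j) (c1, c2))).
    - exact (lift_nf (g := pr1 X X j) ((al, ga) : hom (c0 := pidx X2) (j, _) (c1, c2))). }
  destruct (diag2 (W := X) (j' := j) (a := (al, de) : hom (c0 := pidx X2) (j, j) (c1, c2))
              (P := fun p : (pobj X j * pobj X j)%type => rmul (snd p) (fst p))
              (Q := fun p : (pobj X j * pobj X j)%type => rmul (fst p) (snd p))) as [n [t E]].
  - eapply germ_eq_trans; [apply germ_eq_sym, H1|]. eapply germ_eq_trans; [apply H|].
    exact (lift_nf (g := ro_mul (img_rng R) j) ((al, de) : hom (c0 := pidx X2) (j, j) (c1, c2))).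
  - exists n, t. intros y y'. symmetry. exact (E y y').
Qed.

Lemma EC_comm : (forall j, EC R j) -> ro_comm (img_rng R).
Proof.
  intros HC j.
  destruct (f_common (pidx_filt X) j (some_idx (pidx_filt X))) as [c1 [al [be _]]].
  destruct (f_common (pidx_filt X) (some_idx (pidx_filt X)) j) as [c2 [ga [de _]]].
  eapply germ_eq_trans.
  { apply mul_nf.
    - exact (lift_nf (g := pr2 X X j) ((be, de) : hom (c0 := pidx X2) (_, j) (c1, c2))).
    - exact (lift_nf (g := pr1 X X j) ((al, ga) : hom (c0 := pidx X2) (j, _) (c1, c2))). }
  eapply germ_eq_trans; [|apply germ_eq_sym;
    exact (lift_nf (g := ro_mul (img_rng R) j) ((al, de) : hom (c0 := pidx X2) (j, j) (c1, c2)))].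
  apply (diag2_conv (W := X) (j' := j)
              (P := fun p : (pobj X j * pobj X j)%type => rmul (snd p) (fst p))
              (Q := fun p : (pobj X j * pobj X j)%type => rmul (fst p) (snd p)) ((al, de) : hom (c0 := pidx X2) (j, j) (c1, c2))).
  destruct (HC j) as [n [t E]]. exists n, t. intros y y'. symmetry. exact (E y y').
Qed.

Definition e_of (E : premor One X) (j : pidx R) : pobj R j := gf (E j) tt.
Definition mkE (e : forall j, pobj R j) : premor One X :=
  fun j => @Germ SetC One X j (tt : pidx One) (fun _ => e j) Logic.I.

Lemma promor_ecompat (E : premor One X) : is_promor E -> ecompat R (e_of E).
Proof.
  intros H j j' v. destruct (H j j' v) as [k [u [u' Hk]]]. exact (Hk tt).
Qed.

Lemma ecompat_promor e : ecompat R e -> is_promor (mkE e).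
Proof. intros H j j' v. exists tt, tt, tt. intros x. apply H. Qed.

Lemma unit_EU (E : premor One X) : ro_unit_laws (img_rng R) E -> forall j, EU R (e_of E) j.
Proof.
  intros [HP [HL HR]] j.
  destruct (f_common (pidx_filt X) (some_idx (pidx_filt X)) j) as [c [al [be _]]].
  assert (A : exists n (t : hom j n), forall y, rmul (e_of E j) (pmap R t y) = pmap R t y).
  { apply (diag1 (W := X) (j' := j) (a := be) (P := fun y => rmul (e_of E j) y) (Q := fun y => y)).
    eapply germ_eq_trans; [apply germ_eq_sym|eapply germ_eq_trans; [apply (HL j)|]].
    - apply mul_nf; [exact (lift_nf (g := pcomp E (bang X) j) al)|exact (lift_nf (g := pid X j) be)].
    - exact (lift_nf (g := pid X j) be). }
  assert (B : exists n (t : hom j n), forall y, rmul (pmap R t y) (e_of E j) = pmap R t y).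
  { apply (diag1 (W := X) (j' := j) (a := be) (P := fun y => rmul y (e_of E j)) (Q := fun y => y)).
    eapply germ_eq_trans; [apply germ_eq_sym|eapply germ_eq_trans; [apply (HR j)|]].
    - apply mul_nf; [exact (lift_nf (g := pid X j) be)|exact (lift_nf (g := pcomp E (bang X) j) al)].
    - exact (lift_nf (g := pid X j) be). }
  destruct (ev_and2 (X := X) (j := j) (P1 := fun y _ => rmul (e_of E j) y = y)
              (P2 := fun y _ => rmul y (e_of E j) = y)) as [n [t Ht]].
  - destruct A as [n [t A]]; exists n, t; intros; apply A.
  - destruct B as [n [t B]]; exists n, t; intros; apply B.
  - exists n, t. intros y. exact (Ht y y).
Qed.

Lemma EU_unit e : ecompat R e -> (forall j, EU R e j) -> ro_unit_laws (img_rng R) (mkE e).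
Proof.
  intros Hc HU. split; [apply ecompat_promor, Hc|split]; intros j;
  destruct (f_common (pidx_filt X) (some_idx (pidx_filt X)) j) as [c [al [be _]]];
  destruct (HU j) as [n [t Ht]].
  - eapply germ_eq_trans.
    { apply mul_nf; [exact (lift_nf (g := pcomp (mkE e) (bang X) j) al)|exact (lift_nf (g := pid X j) be)]. }
    eapply germ_eq_trans; [|apply germ_eq_sym; exact (lift_nf (g := pid X j) be)].
    apply (diag1_conv (W := X) (j' := j) be (P := fun y => rmul (e j) y) (Q := fun y => y)).
    exists n, t. intros y; apply Ht.
  - eapply germ_eq_trans.
    { apply mul_nf; [exact (lift_nf (g := pid X j) be)|exact (lift_nf (g := pcomp (mkE e) (bang X) j) al)]. }
    eapply germ_eq_trans; [|apply germ_eq_sym; exact (lift_nf (g := pid X j) be)].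
    apply (diag1_conv (W := X) (j' := j) be (P := fun y => rmul y (e j)) (Q := fun y => y)).
    exists n, t. intros y; apply Ht.
Qed.
End Img.


Set Implicit Arguments.
Unset Strict Implicit.

Lemma iso_EC (R D : prosys RngC) :
  (forall i (x y : pobj D i), rmul x y = rmul y x) -> pro_iso R D -> forall j, EC R j.
Proof.
  intros Hc [phi [psi [_ [_ [H _]]]]] j. destruct (H j) as [k [u [u' Hk]]].
  simpl in u, u', Hk.
  exists k, u'. intros y y'. rewrite <- !Hk.
  destruct (gh (psi j)) as [_ [_ [_ Hm]]]. rewrite <- !Hm, Hc. reflexivity.
Qed.

Lemma iso_EU (R D : prosys RngC) (one : forall i, pobj D i) :
  (forall i x, rmul (one i) x = x /\ rmul x (one i) = x) ->
  (forall i i' (v : hom i i'), pmap D v (one i') = one i) ->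
  pro_iso R D -> exists e, ecompat R e /\ forall j, EU R e j.
Proof.
  intros Hone Hmap [phi [psi [_ [Hpsi [H _]]]]].
  exists (fun j => gf (psi j) (one (gi (psi j)))). split.
  - intros j j' v. destruct (Hpsi j j' v) as [k [a [b Hk]]]. simpl in a, b, Hk.
    specialize (Hk (one k)). rewrite !Hmap in Hk. exact Hk.
  - intros j. destruct (H j) as [k [u [u' Hk]]]. simpl in u, u', Hk.
    exists k, u'. intros y. rewrite <- !Hk.
    destruct (gh (psi j)) as [_ [_ [_ Hm]]]. rewrite <- !Hm.
    rewrite (proj1 (Hone _ _)), (proj2 (Hone _ _)). split; reflexivity.
Qed.

Section Full.
Variables R S : prosys RngC.
Let XR := ro_X (img_rng R).
Let XS := ro_X (img_rng S).
Let X2 := prod_sys XR XR.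

Lemma full_core (g : premor XR XS) :
  is_rngobj_mor (img_rng R) (img_rng S) g -> forall j,
  exists n (t : hom (gi (g j)) n), @rng_hom (pobj R n) (pobj S j) (fun y => gf (g j) (pmap R t y)).
Proof.
  intros [Hp [HA [HZ [HN HM]]]] j.
  set (i := gi (g j)).
  destruct (f_common (pidx_filt XR) i (some_idx (pidx_filt XR))) as [c1 [al [be _]]].
  destruct (f_common (pidx_filt XR) (some_idx (pidx_filt XR)) i) as [c2 [ga [de _]]].
  set (a := (al, de) : hom (c0 := pidx X2) (i, i) (c1, c2)).
  assert (EA : exists n (t : hom i n), forall y y',
     gf (g j) (radd (pmap R t y) (pmap R t y')) = radd (gf (g j) (pmap R t y)) (gf (g j) (pmap R t y'))).
  { destruct (diag2 (W := XS) (j' := j) (a := a)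
      (P := fun p : (pobj XR i * pobj XR i)%type => gf (g j) (radd (fst p) (snd p)))
      (Q := fun p : (pobj XR i * pobj XR i)%type => radd (gf (g j) (fst p)) (gf (g j) (snd p))))
      as [n [t E]]; [|exists n, t; exact E].
    eapply germ_eq_trans; [apply germ_eq_sym; exact (lift_nf (g := pcomp g (ro_add (img_rng R)) j) a)|].
    eapply germ_eq_trans; [apply (HA j)|].
    apply (add_nf (R := S)).
    - exact (lift_nf (g := pcomp g (pr1 XR XR) j) ((al, ga) : hom (c0 := pidx X2) (i, _) (c1, c2))).
    - exact (lift_nf (g := pcomp g (pr2 XR XR) j) ((be, de) : hom (c0 := pidx X2) (_, i) (c1, c2))). }
  assert (EM : exists n (t : hom i n), forall y y',
     gf (g j) (rmul (pmap R t y) (pmap R t y')) = rmul (gf (g j) (pmap R t y)) (gf (g j) (pmap R t y'))).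
  { destruct (diag2 (W := XS) (j' := j) (a := a)
      (P := fun p : (pobj XR i * pobj XR i)%type => gf (g j) (rmul (fst p) (snd p)))
      (Q := fun p : (pobj XR i * pobj XR i)%type => rmul (gf (g j) (fst p)) (gf (g j) (snd p))))
      as [n [t E]]; [|exists n, t; exact E].
    eapply germ_eq_trans; [apply germ_eq_sym; exact (lift_nf (g := pcomp g (ro_mul (img_rng R)) j) a)|].
    eapply germ_eq_trans; [apply (HM j)|].
    apply (mul_nf (R := S)).
    - exact (lift_nf (g := pcomp g (pr1 XR XR) j) ((al, ga) : hom (c0 := pidx X2) (i, _) (c1, c2))).
    - exact (lift_nf (g := pcomp g (pr2 XR XR) j) ((be, de) : hom (c0 := pidx X2) (_, i) (c1, c2))). }
  assert (EN : exists n (t : hom i n), forall y,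
     gf (g j) (rneg (pmap R t y)) = rneg (gf (g j) (pmap R t y))).
  { apply (diag1 (W := XS) (j' := j) (a := idm i)
      (P := fun y => gf (g j) (rneg y)) (Q := fun y => rneg (gf (g j) y))).
    eapply germ_eq_trans; [apply germ_eq_sym; exact (lift_nf (g := pcomp g (ro_neg (img_rng R)) j) (idm i))|].
    eapply germ_eq_trans; [apply (HN j)|].
    exact (lift_nf (g := pcomp (ro_neg (img_rng S)) g j) (idm i)). }
  assert (EZ : gf (g j) rzero = rzero).
  { destruct (HZ j) as [k [u [u' Hk]]]. exact (Hk tt). }
  destruct (ev_and2 (X := XR) (j := i)
     (P1 := fun y y' => gf (g j) (radd y y') = radd (gf (g j) y) (gf (g j) y') /\
                        gf (g j) (rmul y y') = rmul (gf (g j) y) (gf (g j) y'))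
     (P2 := fun y _ => gf (g j) (rneg y) = rneg (gf (g j) y))) as [n [t Ht]].
  - apply (ev_and2 (X := XR) (j := i)
      (P1 := fun y y' => gf (g j) (radd y y') = radd (gf (g j) y) (gf (g j) y'))
      (P2 := fun y y' => gf (g j) (rmul y y') = rmul (gf (g j) y) (gf (g j) y'))); [exact EA|exact EM].
  - destruct EN as [n [t E]]; exists n, t; intros; apply E.
  - exists n, t. destruct (pmap_hom R t) as [h1 [h2 [h3 h4]]].
    split; [|split; [|split]]; intros.
    + rewrite h1. apply (Ht x y).
    + rewrite h2. exact EZ.
    + rewrite h3. apply (Ht x x).
    + rewrite h4. apply (Ht x y).
Qed.
End Full.


Set Implicit Arguments.
Unset Strict Implicit.

Lemma ex2sig (A : Type) (B : A -> Type) (P : forall a, B a -> Prop) :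
  (exists a (b : B a), P a b) -> {a : A & {b : B a | P a b}}.
Proof.
  intros H. destruct (constructive_indefinite_description _ H) as [a Ha].
  destruct (constructive_indefinite_description _ Ha) as [b Hb]. exact (existT _ a (exist _ b Hb)).
Qed.

Lemma FF1 : FF_ProRng_RngObj.
Proof.
  intros R S. split.
  - intros phi psi _ _ H j. exact (H j).
  - intros g Hg.
    pose (F := fun j => ex2sig (full_core Hg j)).
    exists (fun j => @Germ RngC R S j (projT1 (F j)) (fun y => gf (g j) (pmap R (proj1_sig (projT2 (F j))) y))
                        (proj2_sig (projT2 (F j)))).
    assert (E : pro_eq (pro_map_mor (USet RngC)
               (fun j => @Germ RngC R S j (projT1 (F j)) (fun y => gf (g j) (pmap R (proj1_sig (projT2 (F j))) y))
                        (proj2_sig (projT2 (F j))))) g).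
    { intros j. exists (projT1 (F j)), (idm _), (proj1_sig (projT2 (F j))). intros x; simpl.
      rewrite pmap_id. reflexivity. }
    split; [|exact E].
    exact (promor_eq (proj1 Hg) (pro_eq_sym E)).
Qed.

Lemma FF2 : FF_ProCRng_CRngObj.
Proof.
  intros R S. split.
  - intros phi psi _ _ H j. exact (H j).
  - intros g Hg. destruct (proj2 (FF1 (pro_map_sys F_CRng_Rng R) (pro_map_sys F_CRng_Rng S)) g Hg)
      as [phi [Hp He]].
    exists (fun j => @Germ CRngC R S j (gi (phi j)) (gf (phi j)) (gh (phi j))).
    split; [exact Hp|exact He].
Qed.

Lemma FF3 : pro_fully_faithful F_CRng_Rng.
Proof.
  intros X Y. split.
  - intros phi psi _ _ H j. exact (H j).
  - intros g Hg. exists (fun j => @Germ CRngC X Y j (gi (g j)) (gf (g j)) (gh (g j))).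
    split; [exact Hg|]. intros j. exists (gi (g j)), (idm _), (idm _). intros x; reflexivity.
Qed.

Lemma FF4 : FF_CRngObj_RngObj.
Proof. intros A B _ _ f. unfold is_crngobj_mor. tauto. Qed.

Lemma FF5 : FF_ProRing_RingObj.
Proof.
  intros R S. split.
  - intros phi psi _ _ H j. exact (H j).
  - intros g [Hg H1].
    assert (K : forall j, exists n (t : hom (gi (g j)) n),
       @ring_hom (pobj R n) (pobj S j) (fun y => gf (g j) (pmap R t y))).
    { intros j. destruct (full_core Hg j) as [n [t Ht]]. exists n, t. split; [exact Ht|].
      destruct (H1 j) as [k [u [u' Hk]]]. specialize (Hk tt). simpl in Hk.
      simpl. destruct (pmap_hom R t) as [_ Ho]. rewrite <- Hk. f_equal. exact Ho. }
    pose (F := fun j => ex2sig (K j)).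
    exists (fun j => @Germ RingC R S j (projT1 (F j)) (fun y => gf (g j) (pmap R (proj1_sig (projT2 (F j))) y))
                        (proj2_sig (projT2 (F j)))).
    assert (E : pro_eq (pro_map_mor (USet RngC) (pro_map_mor F_Ring_Rng
               (fun j => @Germ RingC R S j (projT1 (F j)) (fun y => gf (g j) (pmap R (proj1_sig (projT2 (F j))) y))
                        (proj2_sig (projT2 (F j)))))) g).
    { intros j. exists (projT1 (F j)), (idm _), (proj1_sig (projT2 (F j))). intros x; simpl.
      rewrite pmap_id. reflexivity. }
    split; [|exact E].
    exact (promor_eq (proj1 Hg) (pro_eq_sym E)).
Qed.

Lemma FF6 : FF_ProCRing_CRingObj.
Proof.
  intros R S. split.
  - intros phi psi _ _ H j. exact (H j).
  - intros g Hg. destruct (proj2 (FF5 (pro_map_sys F_CRing_Ring R) (pro_map_sys F_CRing_Ring S)) g Hg)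
      as [phi [Hp He]].
    exists (fun j => @Germ CRingC R S j (gi (phi j)) (gf (phi j)) (gh (phi j))).
    split; [exact Hp|exact He].
Qed.

Lemma FF7 : pro_fully_faithful F_CRing_Ring.
Proof.
  intros X Y. split.
  - intros phi psi _ _ H j. exact (H j).
  - intros g Hg. exists (fun j => @Germ CRingC X Y j (gi (g j)) (gf (g j)) (gh (g j))).
    split; [exact Hg|]. intros j. exists (gi (g j)), (idm _), (idm _). intros x; reflexivity.
Qed.

Lemma FF8 : FF_CRingObj_RingObj.
Proof. intros A B _ _ f. unfold is_curingobj_mor. tauto. Qed.


Set Implicit Arguments.
Unset Strict Implicit.

Section ProCat.
Variable C : ccat.

Lemma post_congC (X Y Z : prosys C) (j : pidx Y) (k : pidx Z) (h : car C (pobj Y j) -> car C (pobj Z k))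
  (hh : ishom h) (g1 g2 : germ X Y j) :
  germ_eq g1 g2 ->
  germ_eq (Germ (gi g1) (fun x => h (gf g1 x)) (ishom_comp hh (gh g1)))
          (Germ (gi g2) (fun x => h (gf g2 x)) (ishom_comp hh (gh g2))).
Proof. intros [m [u [u' E]]]. exists m, u, u'. intros x; simpl. rewrite E. reflexivity. Qed.

Lemma pcomp_assoc (W X Y Z : prosys C) (h : premor Y Z) (g : premor X Y) (f : premor W X) :
  pro_eq (pcomp h (pcomp g f)) (pcomp (pcomp h g) f).
Proof. intros k. exists _, (idm _), (idm _). intros x; reflexivity. Qed.

Lemma pcomp_cong_r (X Y Z : prosys C) (g : premor Y Z) (f f' : premor X Y) :
  pro_eq f f' -> pro_eq (pcomp g f) (pcomp g f').
Proof.
  intros H k. destruct (H (gi (g k))) as [m [u [u' E]]]. exists m, u, u'. intros x; simpl.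
  rewrite E. reflexivity.
Qed.

Lemma pcomp_cong_l (X Y Z : prosys C) (g g' : premor Y Z) (f : premor X Y) :
  is_promor f -> pro_eq g g' -> pro_eq (pcomp g f) (pcomp g' f).
Proof.
  intros Hf H k. destruct (H k) as [m [u [u' E]]].
  pose proof (post_congC (gh (g k)) (Hf _ _ u)) as A.
  pose proof (post_congC (gh (g' k)) (Hf _ _ u')) as B.
  eapply germ_eq_trans; [apply germ_eq_sym; exact A|].
  eapply germ_eq_trans; [|exact B].
  apply germ_ext. intros x. simpl. apply E.
Qed.

Lemma pcomp_id_l (X Y : prosys C) (f : premor X Y) : pro_eq (pcomp (pid Y) f) f.
Proof. intros k. exists _, (idm _), (idm _). intros x; reflexivity. Qed.

Lemma pcomp_id_r (X Y : prosys C) (f : premor X Y) : pro_eq (pcomp f (pid X)) f.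
Proof. intros k. exists _, (idm _), (idm _). intros x; reflexivity. Qed.

Lemma promor_comp (X Y Z : prosys C) (g : premor Y Z) (f : premor X Y) :
  is_promor g -> is_promor f -> is_promor (pcomp g f).
Proof.
  intros Hg Hf j j' v.
  (* germ_post v (g j' o f) ~ (germ_post v (g j')) o f ~ g j o f *)
  destruct (Hg j j' v) as [m [u [u' E]]].
  pose proof (post_congC (gh (germ_post v (g j'))) (Hf _ _ u)) as A.
  pose proof (post_congC (gh (g j)) (Hf _ _ u')) as B.
  eapply germ_eq_trans; [apply germ_eq_sym; exact A|].
  eapply germ_eq_trans; [|exact B].
  apply germ_ext. intros x. simpl. apply E.
Qed.

Lemma pro_iso_trans (X Y Z : prosys C) : pro_iso X Y -> pro_iso Y Z -> pro_iso X Z.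
Proof.
  intros [f1 [g1 [Hf1 [Hg1 [E1 E1']]]]] [f2 [g2 [Hf2 [Hg2 [E2 E2']]]]].
  exists (pcomp f2 f1), (pcomp g1 g2).
  split; [apply promor_comp; assumption|]. split; [apply promor_comp; assumption|]. split.
  - eapply pro_eq_trans; [apply pro_eq_sym, pcomp_assoc|].
    eapply pro_eq_trans; [apply pcomp_cong_r, pcomp_assoc|].
    eapply pro_eq_trans; [apply pcomp_cong_r, pcomp_cong_l; [exact Hf1|exact E2]|].
    eapply pro_eq_trans; [apply pcomp_cong_r, pcomp_id_l|]. exact E1.
  - eapply pro_eq_trans; [apply pro_eq_sym, pcomp_assoc|].
    eapply pro_eq_trans; [apply pcomp_cong_r, pcomp_assoc|].
    eapply pro_eq_trans; [apply pcomp_cong_r, pcomp_cong_l; [exact Hg2|exact E1']|].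
    eapply pro_eq_trans; [apply pcomp_cong_r, pcomp_id_l|]. exact E2'.
Qed.
End ProCat.


Set Implicit Arguments.
Unset Strict Implicit.

Lemma sig_eq (A : Type) (P : A -> Prop) (a b : {x : A | P x}) : proj1_sig a = proj1_sig b -> a = b.
Proof.
  destruct a as [a Ha], b as [b Hb]; simpl; intros ->. f_equal. apply proof_irrelevance.
Qed.

Section Quot.
Variable A : rng.

Definition qrel (x y : A) : Prop := forall (T : crng) (h : A -> T), rng_hom h -> h x = h y.
Definition qcls (x : A) : A -> Prop := qrel x.
Definition Qt := {P : A -> Prop | exists x, P = qcls x}.
Definition qin (x : A) : Qt := exist _ (qcls x) (ex_intro _ x eq_refl).
Definition qrep (q : Qt) : A := proj1_sig (constructive_indefinite_description _ (proj2_sig q)).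

Lemma qrep_spec q : proj1_sig q = qcls (qrep q).
Proof. unfold qrep. destruct (constructive_indefinite_description _ _) as [x Hx]. exact Hx. Qed.

Lemma qin_rep q : qin (qrep q) = q.
Proof. apply sig_eq. simpl. symmetry. apply qrep_spec. Qed.

Lemma qsurj (q : Qt) : exists x, q = qin x.
Proof. exists (qrep q). symmetry; apply qin_rep. Qed.

Lemma qin_eq x y : qrel x y -> qin x = qin y.
Proof.
  intros H. apply sig_eq. simpl. apply functional_extensionality. intros z.
  apply propositional_extensionality. unfold qcls, qrel in *. split; intros H' T h hh.
  - rewrite <- (H T h hh). apply H', hh.
  - rewrite (H T h hh). apply H', hh.
Qed.

Lemma qin_inv x y : qin x = qin y -> qrel x y.
Proof.
  intros H. apply (f_equal (@proj1_sig _ _)) in H. simpl in H.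
  assert (Hy : qcls y y) by (intros T h _; reflexivity).
  rewrite <- H in Hy. exact Hy.
Qed.

Lemma qrel_rep x : qrel (qrep (qin x)) x.
Proof. apply qin_inv. apply qin_rep. Qed.

Definition qadd (a b : Qt) : Qt := qin (radd (qrep a) (qrep b)).
Definition qzero : Qt := qin rzero.
Definition qneg (a : Qt) : Qt := qin (rneg (qrep a)).
Definition qmul (a b : Qt) : Qt := qin (rmul (qrep a) (qrep b)).

Lemma qadd_in x y : qadd (qin x) (qin y) = qin (radd x y).
Proof.
  apply qin_eq. intros T h hh. pose proof hh as [h1 [h2 [h3 h4]]].
  rewrite !h1, (qrel_rep x hh), (qrel_rep y hh). reflexivity.
Qed.
Lemma qneg_in x : qneg (qin x) = qin (rneg x).
Proof.
  apply qin_eq. intros T h hh. pose proof hh as [h1 [h2 [h3 h4]]].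
  rewrite !h3, (qrel_rep x hh). reflexivity.
Qed.
Lemma qmul_in x y : qmul (qin x) (qin y) = qin (rmul x y).
Proof.
  apply qin_eq. intros T h hh. pose proof hh as [h1 [h2 [h3 h4]]].
  rewrite !h4, (qrel_rep x hh), (qrel_rep y hh). reflexivity.
Qed.

Ltac qdest := repeat match goal with
  | q : Qt |- _ => let x := fresh "x" in destruct (qsurj q) as [x ->]; clear q
  end.

Definition Qrng : rng.
Proof.
  refine (@Rng Qt qadd qzero qneg qmul _ _ _ _ _ _ _); intros; qdest;
  unfold qzero; rewrite ?qadd_in, ?qneg_in, ?qmul_in, ?qadd_in, ?qmul_in, ?qadd_in, ?qmul_in; f_equal.
  - apply raddA.
  - apply raddC.
  - apply radd0.
  - apply raddN.
  - apply rmulA.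
  - apply rmulDr.
  - apply rmulDl.
Defined.

Lemma Qcomm (x y : Qrng) : rmul x y = rmul y x.
Proof.
  change (qmul x y = qmul y x).
  destruct (qsurj x) as [a ->]. destruct (qsurj y) as [b ->]. rewrite !qmul_in. apply qin_eq. intros T h [h1 [h2 [h3 h4]]].
  rewrite !h4. apply crng_comm.
Qed.

Definition Qcrng : crng := @CRng Qrng Qcomm.
End Quot.

Section QRing.
Variable A : ring.
Definition Qring : ring.
Proof.
  refine (@Ring (Qrng (ring_rng A)) (qin (rone A)) _ _); intros x;
  change (Qt (ring_rng A)) in x; destruct (qsurj x) as [a ->].
  - change (qmul (qin (rone A)) (qin a) = qin a). rewrite qmul_in. f_equal. apply rmul1l.
  - change (qmul (qin a) (qin (rone A)) = qin a). rewrite qmul_in. f_equal. apply rmul1r.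
Defined.
Definition Qcring : cring := @CRing Qring (@Qcomm (ring_rng A)).
End QRing.

Definition qmap (A B : rng) (f : A -> B) (q : Qt A) : Qt B := qin (f (qrep q)).

Lemma qmap_in (A B : rng) (f : A -> B) : rng_hom f -> forall x, qmap f (qin x) = qin (f x).
Proof.
  intros hf x. apply qin_eq. intros T h hh.
  exact (qrel_rep x (rng_hom_comp hh hf)).
Qed.

Lemma qin_hom (A : rng) : @rng_hom A (Qrng A) (@qin A).
Proof.
  split; [|split; [|split]]; intros; simpl.
  - symmetry; apply qadd_in.
  - reflexivity.
  - symmetry; apply qneg_in.
  - symmetry; apply qmul_in.
Qed.

Lemma qmap_hom (A B : rng) (f : A -> B) : rng_hom f -> @rng_hom (Qrng A) (Qrng B) (qmap f).
Proof.
  intros hf. pose proof hf as [h1 [h2 [h3 h4]]].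
  split; [|split; [|split]]; intros.
  - change (Qt A) in x, y. destruct (qsurj x) as [a ->], (qsurj y) as [b ->].
    change (qmap f (qadd (qin a) (qin b)) = qadd (qmap f (qin a)) (qmap f (qin b))).
    rewrite qadd_in, !(qmap_in hf), qadd_in, h1. reflexivity.
  - change (qmap f (qin rzero) = qin rzero). rewrite (qmap_in hf), h2. reflexivity.
  - change (Qt A) in x. destruct (qsurj x) as [a ->].
    change (qmap f (qneg (qin a)) = qneg (qmap f (qin a))).
    rewrite qneg_in, !(qmap_in hf), qneg_in, h3. reflexivity.
  - change (Qt A) in x, y. destruct (qsurj x) as [a ->], (qsurj y) as [b ->].
    change (qmap f (qmul (qin a) (qin b)) = qmul (qmap f (qin a)) (qmap f (qin b))).
    rewrite qmul_in, !(qmap_in hf), qmul_in, h4. reflexivity.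
Qed.

Lemma qmap_ring_hom (A B : ring) (f : A -> B) : ring_hom f -> @ring_hom (Qring A) (Qring B) (qmap f).
Proof.
  intros [hf ho]. split; [apply qmap_hom, hf|].
  change (qmap f (qin (rone A)) = qin (rone B)). rewrite (qmap_in hf), ho. reflexivity.
Qed.

Definition ABsys (R : prosys RngC) : prosys CRngC.
Proof.
  refine (@ProSys CRngC (pidx R) (pidx_filt R) (fun i => Qcrng (pobj R i))
            (fun i j u => qmap (pmap R u)) (fun i j u => qmap_hom (pmap_hom R u)) _ _).
  - intros i x. change (Qt (pobj R i)) in x. destruct (qsurj x) as [a ->].
    rewrite (qmap_in (pmap_hom R _)), pmap_id. reflexivity.
  - intros i j k v u x. change (Qt (pobj R k)) in x. destruct (qsurj x) as [a ->].
    simpl. rewrite !(qmap_in (pmap_hom R _)), pmap_comp. reflexivity.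
Defined.

Definition ABsysR (D : prosys RingC) : prosys CRingC.
Proof.
  refine (@ProSys CRingC (pidx D) (pidx_filt D) (fun i => Qcring (pobj D i))
            (fun i j u => qmap (pmap D u)) (fun i j u => qmap_ring_hom (pmap_hom D u)) _ _).
  - intros i x. change (Qt (pobj D i)) in x. destruct (qsurj x) as [a ->].
    rewrite (qmap_in (proj1 (pmap_hom D _))), pmap_id. reflexivity.
  - intros i j k v u x. change (Qt (pobj D k)) in x. destruct (qsurj x) as [a ->].
    simpl. rewrite !(qmap_in (proj1 (pmap_hom D _))), pmap_comp. reflexivity.
Defined.


Set Implicit Arguments.
Unset Strict Implicit.

Section Image.
Variables (A B : rng) (f : A -> B).
Hypothesis hf : rng_hom f.
Hypothesis hc : forall x y, rmul (f x) (f y) = rmul (f y) (f x).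

Let Im := {z : B | exists y, z = f y}.
Let hf1 := proj1 hf.
Let hf2 := proj1 (proj2 hf).
Let hf3 := proj1 (proj2 (proj2 hf)).
Let hf4 := proj2 (proj2 (proj2 hf)).

Definition im_add (a b : Im) : Im.
Proof.
  exists (radd (proj1_sig a) (proj1_sig b)).
  destruct a as [a [x ->]], b as [b [y ->]]. exists (radd x y). simpl. symmetry. apply hf1.
Defined.
Definition im_zero : Im.
Proof. exists rzero. exists rzero. symmetry; apply hf2. Defined.
Definition im_neg (a : Im) : Im.
Proof. exists (rneg (proj1_sig a)). destruct a as [a [x ->]]. exists (rneg x). symmetry; apply hf3. Defined.
Definition im_mul (a b : Im) : Im.
Proof.
  exists (rmul (proj1_sig a) (proj1_sig b)).
  destruct a as [a [x ->]], b as [b [y ->]]. exists (rmul x y). simpl. symmetry. apply hf4.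
Defined.

Definition im_rng : rng.
Proof.
  refine (@Rng Im im_add im_zero im_neg im_mul _ _ _ _ _ _ _); intros; apply sig_eq; simpl.
  - apply raddA.
  - apply raddC.
  - apply radd0.
  - apply raddN.
  - apply rmulA.
  - apply rmulDr.
  - apply rmulDl.
Defined.

Lemma im_comm (x y : im_rng) : rmul x y = rmul y x.
Proof.
  apply sig_eq. simpl. destruct x as [a [u ->]], y as [b [v ->]]. simpl. apply hc.
Qed.

Definition im_crng : crng := @CRng im_rng im_comm.

Definition im_cores (x : A) : im_crng := exist _ (f x) (ex_intro _ x eq_refl).

Lemma im_cores_hom : @rng_hom A im_crng im_cores.
Proof.
  split; [|split; [|split]]; intros; apply sig_eq; simpl.
  - apply hf1.
  - apply hf2.
  - apply hf3.
  - apply hf4.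
Qed.

Lemma qrel_comm_hom x y : qrel x y -> f x = f y.
Proof.
  intros H. apply (f_equal (@proj1_sig _ _) (H im_crng im_cores im_cores_hom)).
Qed.
End Image.

Lemma qlift_eq (A B : rng) (f : A -> B) (hf : rng_hom f)
  (hc : forall x y, rmul (f x) (f y) = rmul (f y) (f x)) x : f (qrep (qin x)) = f x.
Proof. apply (qrel_comm_hom hf hc). apply qrel_rep. Qed.

Lemma qlift_hom (A B : rng) (f : A -> B) (hf : rng_hom f)
  (hc : forall x y, rmul (f x) (f y) = rmul (f y) (f x)) :
  @rng_hom (Qrng A) B (fun q => f (qrep q)).
Proof.
  pose proof hf as [h1 [h2 [h3 h4]]].
  split; [|split; [|split]]; intros; simpl.
  - unfold qadd. rewrite (qlift_eq hf hc). apply h1.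
  - unfold qzero. rewrite (qlift_eq hf hc). apply h2.
  - unfold qneg. rewrite (qlift_eq hf hc). apply h3.
  - unfold qmul. rewrite (qlift_eq hf hc). apply h4.
Qed.

Section ABIso.
Variable R : prosys RngC.
Hypothesis HC : forall j, EC R j.
Let Q' := pro_map_sys F_CRng_Rng (ABsys R).
Let W j := ex2sig (HC j).
Let nn j : pidx R := projT1 (W j).
Let tt' j : hom j (nn j) := proj1_sig (projT2 (W j)).
Let cm j : forall x y, rmul (pmap R (tt' j) x) (pmap R (tt' j) y) = rmul (pmap R (tt' j) y) (pmap R (tt' j) x)
  := proj2_sig (projT2 (W j)).

Definition ab_phi : premor R Q' := fun j => @Germ RngC R Q' j j (@qin (pobj R j)) (qin_hom _).
Definition ab_psi : premor Q' R := fun j => @Germ RngC Q' R j (nn j) (fun q => pmap R (tt' j) (qrep q))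
   (qlift_hom (pmap_hom R (tt' j)) (@cm j)).

Lemma ab_iso : pro_iso R Q'.
Proof.
  exists ab_phi, ab_psi. split; [|split; [|split]].
  - intros j j' v. exists j', (idm _), v. intros x. simpl.
    rewrite pmap_id, (qmap_in (pmap_hom R v)). reflexivity.
  - intros j j' v.
    destruct (f_merge (pidx_filt R) (cmp (tt' j') v) (tt' j)) as [k [p [q E]]].
    exists k, p, q. intros x. simpl. change (Qt (pobj R k)) in x.
    unfold qmap. rewrite !(qlift_eq (pmap_hom R _) (@cm _)).
    rewrite !pmapC, E. reflexivity.
  - intros j. exists (nn j), (idm _), (tt' j). intros x. simpl.
    rewrite (qlift_eq (pmap_hom R _) (@cm _)), pmap_id. reflexivity.
  - intros j. exists (nn j), (idm _), (tt' j). intros x. simpl.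
    change (Qt (pobj R (nn j))) in x; destruct (qsurj x) as [a ->]. rewrite (qmap_in (pmap_hom R _)), pmap_id. reflexivity.
Qed.
End ABIso.

Lemma prosys_eq (C : ccat) I F o m h1 h2 h3 h1' h2' h3' :
  @ProSys C I F o m h1 h2 h3 = @ProSys C I F o m h1' h2' h3'.
Proof.
  rewrite (proof_irrelevance _ h1 h1'), (proof_irrelevance _ h2 h2'), (proof_irrelevance _ h3 h3').
  reflexivity.
Qed.

Lemma ABsysR_eq (D : prosys RingC) :
  pro_map_sys F_Ring_Rng (pro_map_sys F_CRing_Ring (ABsysR D)) =
  pro_map_sys F_CRng_Rng (ABsys (pro_map_sys F_Ring_Rng D)).
Proof. apply prosys_eq. Qed.


Set Implicit Arguments.
Unset Strict Implicit.

Section RngAlg.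
Variable A : rng.
Lemma radd_cancel_r (a b c : A) : radd a c = radd b c -> a = b.
Proof.
  intros H.
  assert (K : forall x : A, radd (radd x c) (rneg c) = x).
  { intros x. rewrite raddA, (raddC c), raddN, raddC, radd0. reflexivity. }
  rewrite <- (K a), H, K. reflexivity.
Qed.
Lemma rmul0r (x : A) : rmul x rzero = rzero.
Proof.
  apply (radd_cancel_r (c := rmul x rzero)). rewrite <- rmulDr, !radd0. reflexivity.
Qed.
Lemma rmul0l (x : A) : rmul rzero x = rzero.
Proof.
  apply (radd_cancel_r (c := rmul rzero x)). rewrite <- rmulDl, !radd0. reflexivity.
Qed.
Lemma rmulNr (x y : A) : rmul x (rneg y) = rneg (rmul x y).
Proof.
  apply (radd_cancel_r (c := rmul x y)). rewrite <- rmulDr, !raddN, rmul0r. reflexivity.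
Qed.
Lemma rmulNl (x y : A) : rmul (rneg x) y = rneg (rmul x y).
Proof.
  apply (radd_cancel_r (c := rmul x y)). rewrite <- rmulDl, !raddN, rmul0l. reflexivity.
Qed.
End RngAlg.

Unset Implicit Arguments.
Section Corner.
Variable R : prosys RngC.
Variable e : forall j, pobj R j.
Hypothesis Hc : ecompat R e.
Hypothesis HU : forall j, EU R e j.

Lemma e_idem (j : pidx R) : rmul (e j) (e j) = e j.
Proof.
  destruct (HU j) as [n [t H]]. specialize (H (e n)). rewrite (Hc _ _ t) in H. apply H.
Qed.

Definition cmem (j : pidx R) (x : pobj R j) : Prop := rmul (e j) x = x /\ rmul x (e j) = x.
Definition cty (j : pidx R) := {x : pobj R j | cmem j x}.

Definition c_add (j : pidx R) (a b : cty j) : cty j.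
Proof.
  exists (radd (proj1_sig a) (proj1_sig b)). destruct a as [a [a1 a2]], b as [b [b1 b2]]; simpl.
  split; [rewrite rmulDr, a1, b1|rewrite rmulDl, a2, b2]; reflexivity.
Defined.
Definition c_zero (j : pidx R) : cty j.
Proof. exists rzero. split; [apply rmul0r|apply rmul0l]. Defined.
Definition c_neg (j : pidx R) (a : cty j) : cty j.
Proof.
  exists (rneg (proj1_sig a)). destruct a as [a [a1 a2]]; simpl.
  split; [rewrite rmulNr, a1|rewrite rmulNl, a2]; reflexivity.
Defined.
Definition c_mul (j : pidx R) (a b : cty j) : cty j.
Proof.
  exists (rmul (proj1_sig a) (proj1_sig b)). destruct a as [a [a1 a2]], b as [b [b1 b2]]; simpl.
  split; [rewrite <- rmulA, a1|rewrite rmulA, b2]; reflexivity.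
Defined.

Definition c_rng (j : pidx R) : rng.
Proof.
  refine (@Rng (cty j) (@c_add j) (c_zero j) (@c_neg j) (@c_mul j) _ _ _ _ _ _ _); intros;
  apply sig_eq; simpl.
  - apply raddA.
  - apply raddC.
  - apply radd0.
  - apply raddN.
  - apply rmulA.
  - apply rmulDr.
  - apply rmulDl.
Defined.

Definition c_one (j : pidx R) : cty j := exist _ (e j) (conj (e_idem j) (e_idem j)).

Definition c_ring (j : pidx R) : ring.
Proof.
  refine (@Ring (c_rng j) (c_one j) _ _); intros [x [x1 x2]]; apply sig_eq; simpl; assumption.
Defined.

Definition c_map (j j' : pidx R) (v : hom j j') (x : cty j') : cty j.
Proof.
  exists (pmap R v (proj1_sig x)). destruct x as [x [x1 x2]]; unfold cmem; simpl.
  destruct (pmap_hom R v) as [_ [_ [_ h4]]].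
  rewrite <- (Hc _ _ v), <- !h4, x1, x2. split; reflexivity.
Defined.

Lemma c_map_hom (j j' : pidx R) (v : hom j j') : @ring_hom (c_ring j') (c_ring j) (c_map j j' v).
Proof.
  destruct (pmap_hom R v) as [h1 [h2 [h3 h4]]].
  split; [split; [|split; [|split]]|]; intros; apply sig_eq; simpl.
  - apply h1.
  - apply h2.
  - apply h3.
  - apply h4.
  - apply Hc.
Qed.

Definition Corner : prosys RingC.
Proof.
  refine (@ProSys RingC (pidx R) (pidx_filt R) c_ring (fun j j' v => @c_map j j' v)
            (fun j j' v => c_map_hom j j' v) _ _).
  - intros i x. apply sig_eq. simpl. rewrite pmap_id. reflexivity.
  - intros i j k v u x. apply sig_eq. simpl. rewrite pmap_comp. reflexivity.
Defined.

Let D' := pro_map_sys F_Ring_Rng Corner.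
Let W j := ex2sig (HU j).
Let nn j : pidx R := projT1 (W j).
Let tt' j : hom j (nn j) := proj1_sig (projT2 (W j)).
Let sp j : forall y, cmem j (pmap R (tt' j) y) := proj2_sig (projT2 (W j)).

Definition c_in (j : pidx R) (y : pobj R (nn j)) : cty j := exist _ (pmap R (tt' j) y) (@sp j y).

Lemma c_in_hom (j : pidx R) : @rng_hom (pobj R (nn j)) (c_rng j) (@c_in j).
Proof.
  destruct (pmap_hom R (tt' j)) as [h1 [h2 [h3 h4]]].
  split; [|split; [|split]]; intros; apply sig_eq; simpl.
  - apply h1.
  - apply h2.
  - apply h3.
  - apply h4.
Qed.

Lemma c_out_hom (j : pidx R) : @rng_hom (c_rng j) (pobj R j) (@proj1_sig _ _).
Proof. split; [|split; [|split]]; intros; reflexivity. Qed.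

Definition cr_phi : premor R D' := fun j => @Germ RngC R D' j (nn j) (@c_in j) (c_in_hom j).
Definition cr_psi : premor D' R := fun j => @Germ RngC D' R j j (@proj1_sig _ _) (c_out_hom j).

Lemma corner_iso : pro_iso R D'.
Proof.
  exists cr_phi, cr_psi. split; [|split; [|split]].
  - intros j j' v.
    destruct (f_merge (pidx_filt R) (cmp (tt' j') v) (tt' j)) as [k [p [q E]]].
    exists k, p, q. intros x. apply sig_eq. simpl. rewrite !pmapC, E. reflexivity.
  - intros j j' v. exists j', (idm _), v. intros x. simpl. rewrite pmap_id. reflexivity.
  - intros j. exists (nn j), (idm _), (tt' j). intros x. simpl. rewrite pmap_id. reflexivity.
  - intros j. exists (nn j), (idm _), (tt' j). intros x. apply sig_eq. simpl. rewrite pmap_id. reflexivity.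
Qed.

Lemma corner_EC : (forall j, EC R j) -> forall j, EC D' j.
Proof.
  intros H j. destruct (H j) as [n [t Ht]]. exists n, t. intros y y'. apply sig_eq. simpl. apply Ht.
Qed.
End Corner.


Set Implicit Arguments.
Unset Strict Implicit.

Lemma char_part (R : prosys RngC) :
     ((exists C : prosys CRngC, pro_iso R (pro_map_sys F_CRng_Rng C)) <->
        is_crngobj (img_rng R)) /\
     ((exists C : prosys RingC, pro_iso R (pro_map_sys F_Ring_Rng C)) <->
        exists e : premor One (ro_X (img_rng R)), is_uringobj (@URingData (img_rng R) e)) /\
     ((exists C : prosys CRingC,
         pro_iso R (pro_map_sys F_Ring_Rng (pro_map_sys F_CRing_Ring C))) <->
        exists e : premor One (ro_X (img_rng R)), is_curingobj (@URingData (img_rng R) e)).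
Proof.
  split; [|split]; split.
  - intros [C HI]. split; [apply rngobj_img|]. apply EC_comm.
    apply (@iso_EC R (pro_map_sys F_CRng_Rng C)); [intros i x y; apply (@crng_comm (pobj C i))|exact HI].
  - intros [_ Hc]. exists (ABsys R). apply ab_iso. apply comm_EC. exact Hc.
  - intros [C HI].
    destruct (@iso_EU R (pro_map_sys F_Ring_Rng C) (fun i => rone (pobj C i))) as [e [Hc HU]].
    + intros i x. split; [apply rmul1l|apply rmul1r].
    + intros i i' v. apply (proj2 (pmap_hom C v)).
    + exact HI.
    + exists (@mkE R e). split; [apply rngobj_img|]. apply EU_unit; assumption.
  - intros [E [_ HUL]].
    exists (Corner R (e_of E) (promor_ecompat (proj1 HUL)) (unit_EU HUL)). apply corner_iso.
  - intros [C HI].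
    destruct (@iso_EU R (pro_map_sys F_Ring_Rng (pro_map_sys F_CRing_Ring C)) (fun i => rone (pobj C i)))
      as [e [Hc HU]].
    + intros i x. split; [apply rmul1l|apply rmul1r].
    + intros i i' v. apply (proj2 (pmap_hom C v)).
    + exact HI.
    + exists (@mkE R e). split; [split; [apply rngobj_img|apply EU_unit; assumption]|]. apply EC_comm.
      apply (@iso_EC R (pro_map_sys F_Ring_Rng (pro_map_sys F_CRing_Ring C)));
        [intros i x y; apply (@cring_comm (pobj C i))|exact HI].
  - intros [E [[_ HUL] Hcomm]].
    pose (D := Corner R (e_of E) (promor_ecompat (proj1 HUL)) (unit_EU HUL)).
    exists (ABsysR D). rewrite ABsysR_eq.
    apply pro_iso_trans with (pro_map_sys F_Ring_Rng D); [apply corner_iso|].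
    apply ab_iso. apply corner_EC. apply comm_EC. exact Hcomm.
Qed.

Theorem mainTheorem4 :
  (* first square: Rng / CRng *)
  FF_ProRng_RngObj /\ FF_ProCRng_CRngObj /\ pro_fully_faithful F_CRng_Rng /\ FF_CRngObj_RngObj /\
  (* second square: Ring / CRing *)
  FF_ProRing_RingObj /\ FF_ProCRing_CRingObj /\ pro_fully_faithful F_CRing_Ring /\
  FF_CRingObj_RingObj /\
  (* characterisation of pro-rings isomorphic to (unital) (commutative) pro-rings *)
  (forall R : prosys RngC,
     ((exists C : prosys CRngC, pro_iso R (pro_map_sys F_CRng_Rng C)) <->
        is_crngobj (img_rng R)) /\
     ((exists C : prosys RingC, pro_iso R (pro_map_sys F_Ring_Rng C)) <->
        exists e : premor One (ro_X (img_rng R)), is_uringobj (@URingData (img_rng R) e)) /\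
     ((exists C : prosys CRingC,
         pro_iso R (pro_map_sys F_Ring_Rng (pro_map_sys F_CRing_Ring C))) <->
        exists e : premor One (ro_X (img_rng R)), is_curingobj (@URingData (img_rng R) e))).
Proof.
  split; [exact FF1|]. split; [exact FF2|]. split; [exact FF3|]. split; [exact FF4|].
  split; [exact FF5|]. split; [exact FF6|]. split; [exact FF7|]. split; [exact FF8|].
  exact char_part.
Qed.
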